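(* Let $a\neq 0$ be a real number. On the space of entire functions $f(\alpha)$ of one complex variable, define the linear operators $$N=\frac{e^{a\alpha}-1}{a}\,\frac{d}{d\alpha},\quad A_+=\alpha,\quad A_-=e^{a\alpha}\frac{d}{d\alpha},\quad B_+=\Big(\frac{1-e^{-a\alpha}}{a}\Big)^2,\quad B_-=e^{a\alpha}\frac{d^2}{d\alpha^2},\quad M=1,$$ where functions of $\alpha$ act by multiplication. Then these operators satisfy the commutation relations $[N,A_+]=\frac{e^{aA_+}-1}{a}$, $[N,A_-]=-A_-$, $[A_-,A_+]=Me^{aA_+}$, $[N,B_+]=2B_+$, $[N,B_-]=-2B_--aA_-N$, $[B_-,B_+]=2(1+e^{-aA_+})N+2M-2aA_-B_+$, $[A_+,B_-]=-(1+e^{aA_+})A_-+a\,e^{aA_+}MN$, $[A_+,B_+]=0$, $[A_-,B_+]=2\frac{1-e^{-aA_+}}{a}$, $[A_-,B_-]=-aA_-^2$, and $[M,X]=0$ for each of these operators $X$.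
   Context: $[X,Y]=XY-YX$ denotes the commutator of operators, and $e^{cA_+}$ is the operator of multiplication by $e^{c\alpha}$. These relations are the commutation rules of the non-standard quantum two-photon algebra $U_{a}(h_6)$. *)

(* Defs.v *)
From Stdlib Require Import Reals ClassicalEpsilon.
From Coquelicot Require Import Coquelicot.

Open Scope C_scope.

Definition Cexp (z : C) : C :=
  (exp (Re z) * cos (Im z), exp (Re z) * sin (Im z))%R.

Definition Cderiv (f : C -> C) (z : C) : C :=
  epsilon (inhabits (RtoC 0))
    (fun l : C => @is_derive C_AbsRing C_NormedModule f z l).

Definition entire (f : C -> C) : Prop :=
  forall z : C, @ex_derive C_AbsRing C_NormedModule f z.

Definition op := (C -> C) -> (C -> C).

Definition compo (X Y : op) : op := fun f => X (Y f).
Definition addo (X Y : op) : op := fun f z => X f z + Y f z.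
Definition subo (X Y : op) : op := fun f z => X f z - Y f z.
Definition scalo (c : C) (X : op) : op := fun f z => c * X f z.
Definition zeroo : op := fun f z => RtoC 0.
Definition mulop (g : C -> C) : op := fun f z => g z * f z.
Definition comm (X Y : op) : op := subo (compo X Y) (compo Y X).

Definition D : op := Cderiv.

Section Ops.
Variable a : R.
Definition Nop : op := compo (mulop (fun z => (Cexp (RtoC a * z) - 1) / RtoC a)) D.
Definition Aplus : op := mulop (fun z => z).
Definition Aminus : op := compo (mulop (fun z => Cexp (RtoC a * z))) D.
Definition Bplus : op :=
  mulop (fun z => ((1 - Cexp (- (RtoC a * z))) / RtoC a) * ((1 - Cexp (- (RtoC a * z))) / RtoC a)).
Definition Bminus : op := compo (mulop (fun z => Cexp (RtoC a * z))) (compo D D).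
Definition Mop : op := mulop (fun _ => RtoC 1).
Definition expAplus (c : C) : op := mulop (fun z => Cexp (c * z)).
End Ops.

(* Main.v *)
Require Import Defs.
From Stdlib Require Import Reals Lra Lia ClassicalEpsilon FunctionalExtensionality.
From Coquelicot Require Import Coquelicot.
Require Import Defs.
Open Scope C_scope.

Open Scope C_scope.

Definition Cdiff (f : C -> C) (z l : C) : Prop :=
  forall eps : R, (0 < eps)%R -> exists delta : R, (0 < delta)%R /\
    forall w, (Cmod (w - z) < delta)%R -> (Cmod (f w - f z - l * (w - z)) <= eps * Cmod (w - z))%R.

Lemma is_derive_Cdiff f z l : @is_derive C_AbsRing C_NormedModule f z l -> Cdiff f z l.
Proof.
  intros [_ H] eps Heps.
  assert (Hl : is_filter_lim (locally z) z) by (intros P HP; exact HP).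
  specialize (H z Hl (mkposreal eps Heps)). destruct H as [d Hd].
  exists d. split; [apply cond_pos|]. intros w Hw.
  assert (Hb : ball z d w). { apply (@norm_compat1 C_AbsRing (AbsRing_NormedModule C_AbsRing) z w d). exact Hw. }
  specialize (Hd w Hb). rewrite (Cmult_comm l). exact Hd.
Qed.

Lemma Cdiff_is_derive f z l : Cdiff f z l -> @is_derive C_AbsRing C_NormedModule f z l.
Proof.
  intros H. split; [apply is_linear_scal_l|].
  intros x Hx. apply (@is_filter_lim_locally_unique C_AbsRing (AbsRing_NormedModule C_AbsRing)) in Hx. subst x.
  intros eps. destruct (H eps (cond_pos eps)) as [d [Hd H']].
  assert (Hnf := @norm_factor_gt_0 C_AbsRing (AbsRing_NormedModule C_AbsRing)).
  assert (Hp : (0 < d / @norm_factor C_AbsRing (AbsRing_NormedModule C_AbsRing))%R).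
  { apply Rdiv_lt_0_compat; assumption. }
  exists (mkposreal _ Hp). intros y Hy. simpl.
  apply (@norm_compat2 C_AbsRing (AbsRing_NormedModule C_AbsRing)) in Hy. simpl in Hy.
  pose proof (H' y) as E. rewrite (Cmult_comm l) in E. apply E.
  set (nf := @norm_factor C_AbsRing (AbsRing_NormedModule C_AbsRing)) in *.
  replace d with (nf * (d / nf))%R by (field; lra). exact Hy.
Qed.

Lemma is_derive_Cdiff' f z l : @is_derive C_AbsRing (AbsRing_NormedModule C_AbsRing) f z l -> Cdiff f z l.
Proof.
  intros [_ H] eps Heps.
  assert (Hl : is_filter_lim (locally z) z) by (intros P HP; exact HP).
  specialize (H z Hl (mkposreal eps Heps)). destruct H as [d Hd].
  exists d. split; [apply cond_pos|]. intros w Hw.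
  assert (Hb : ball z d w). { apply (@norm_compat1 C_AbsRing (AbsRing_NormedModule C_AbsRing) z w d). exact Hw. }
  specialize (Hd w Hb). rewrite (Cmult_comm l). exact Hd.
Qed.

Lemma Cdiff_is_derive' f z l : Cdiff f z l -> @is_derive C_AbsRing (AbsRing_NormedModule C_AbsRing) f z l.
Proof.
  intros H. split; [apply is_linear_scal_l|].
  intros x Hx. apply (@is_filter_lim_locally_unique C_AbsRing (AbsRing_NormedModule C_AbsRing)) in Hx. subst x.
  intros eps. destruct (H eps (cond_pos eps)) as [d [Hd H']].
  assert (Hnf := @norm_factor_gt_0 C_AbsRing (AbsRing_NormedModule C_AbsRing)).
  assert (Hp : (0 < d / @norm_factor C_AbsRing (AbsRing_NormedModule C_AbsRing))%R).
  { apply Rdiv_lt_0_compat; assumption. }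
  exists (mkposreal _ Hp). intros y Hy. simpl.
  apply (@norm_compat2 C_AbsRing (AbsRing_NormedModule C_AbsRing)) in Hy. simpl in Hy.
  pose proof (H' y) as E. rewrite (Cmult_comm l) in E. apply E.
  set (nf := @norm_factor C_AbsRing (AbsRing_NormedModule C_AbsRing)) in *.
  replace d with (nf * (d / nf))%R by (field; lra). exact Hy.
Qed.
Open Scope C_scope.

Ltac Cdestr := repeat match goal with c : C |- _ => destruct c end.
Ltac Csplit := apply injective_projections; simpl.

Lemma Cmod_le_abs (p q : R) : (Cmod (p, q) <= Rabs p + Rabs q)%R.
Proof.
  unfold Cmod; simpl.
  rewrite <- (sqrt_pow2 (Rabs p + Rabs q)) by (pose proof (Rabs_pos p); pose proof (Rabs_pos q); lra).
  apply sqrt_le_1_alt.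
  pose proof (Rabs_pos p); pose proof (Rabs_pos q).
  replace (p * (p * 1))%R with (Rabs p * Rabs p)%R.
  replace (q * (q * 1))%R with (Rabs q * Rabs q)%R. simpl. nra.
  rewrite <- Rabs_mult. rewrite Rabs_right. ring. nra.
  rewrite <- Rabs_mult. rewrite Rabs_right. ring. nra.
Qed.

Lemma abs_re_le (c : C) : (Rabs (fst c) <= Cmod c)%R.
Proof. destruct c as [p q]. unfold Cmod. simpl. destruct (sqrt_plus_sqr p q) as [H _].
  eapply Rle_trans; [|exact H]. apply Rmax_l. Qed.
Lemma abs_im_le (c : C) : (Rabs (snd c) <= Cmod c)%R.
Proof. destruct c as [p q]. unfold Cmod. simpl. destruct (sqrt_plus_sqr p q) as [H _].
  eapply Rle_trans; [|exact H]. apply Rmax_r. Qed.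

Lemma Cmod_le_reim (c : C) : (Cmod c <= Rabs (fst c) + Rabs (snd c))%R.
Proof. destruct c; apply Cmod_le_abs. Qed.

Lemma Cmod_RtoC_mult (r : R) (c : C) : Cmod (RtoC r * c) = (Rabs r * Cmod c)%R.
Proof. rewrite Cmod_mult, Cmod_R. reflexivity. Qed.

Lemma Cmod_sub_sym (x y : C) : Cmod (x - y) = Cmod (y - x).
Proof. replace (x - y) with (- (y - x)) by ring. apply Cmod_opp. Qed.

Lemma Cmod_triang3 (x y z : C) : (Cmod (x + y + z) <= Cmod x + Cmod y + Cmod z)%R.
Proof. eapply Rle_trans; [apply Cmod_triangle|]. pose proof (Cmod_triangle x y). lra. Qed.

Lemma Cmod_minus_le (x y : C) : (Cmod (x - y) <= Cmod x + Cmod y)%R.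
Proof. unfold Cminus. eapply Rle_trans; [apply Cmod_triangle|]. rewrite Cmod_opp. lra. Qed.

Lemma Cmod_rev_triang (x y : C) : (Cmod x - Cmod y <= Cmod (x - y))%R.
Proof. pose proof (Cmod_triangle (x - y) y). replace (x - y + y) with x in H by ring. lra. Qed.

Lemma D_spec f z l : @is_derive C_AbsRing C_NormedModule f z l -> D f z = l.
Proof.
  intros H. unfold D, Cderiv.
  pose proof (epsilon_spec (inhabits (RtoC 0))
    (fun l : C => @is_derive C_AbsRing C_NormedModule f z l) (ex_intro _ l H)) as H2.
  apply is_C_derive_unique in H. apply is_C_derive_unique in H2. congruence.
Qed.

Lemma entire_D f z : entire f -> @is_derive C_AbsRing C_NormedModule f z (D f z).
Proof. intros Hf. destruct (Hf z) as [l Hl]. rewrite (D_spec f z l Hl). exact Hl. Qed.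

Lemma Cdiff_unique f z l1 l2 : Cdiff f z l1 -> Cdiff f z l2 -> l1 = l2.
Proof.
  intros H1 H2. apply Cdiff_is_derive, is_C_derive_unique in H1.
  apply Cdiff_is_derive, is_C_derive_unique in H2. congruence.
Qed.

Lemma Cdiff_loc f h z l r : (0 < r)%R -> (forall w, (Cmod (w - z) < r)%R -> f w = h w) ->
  Cdiff h z l -> Cdiff f z l.
Proof.
  intros Hr Heq H eps Heps. destruct (H eps Heps) as [d [Hd H']].
  exists (Rmin d r). split. apply Rmin_pos; lra.
  intros w Hw. rewrite (Heq w), (Heq z). apply H'.
  eapply Rlt_le_trans; [exact Hw| apply Rmin_l].
  unfold Cminus; rewrite Cplus_opp_r, Cmod_0; lra.
  eapply Rlt_le_trans; [exact Hw| apply Rmin_r].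
Qed.

Definition Ccont (g : C -> C) (z : C) : Prop :=
  forall eps : R, (0 < eps)%R -> exists delta : R, (0 < delta)%R /\
    forall w, (Cmod (w - z) < delta)%R -> (Cmod (g w - g z) < eps)%R.

Lemma Cdiff_Ccont f z l : Cdiff f z l -> Ccont f z.
Proof.
  intros H eps Heps. destruct (H 1%R Rlt_0_1) as [d [Hd H']].
  exists (Rmin d (eps / (1 + Cmod l + 1))). split.
  { apply Rmin_pos. lra. apply Rdiv_lt_0_compat. lra. pose proof (Cmod_ge_0 l). lra. }
  intros w Hw. assert (Hw1 : (Cmod (w - z) < d)%R) by (eapply Rlt_le_trans; [exact Hw|apply Rmin_l]).
  assert (Hw2 : (Cmod (w - z) < eps / (1 + Cmod l + 1))%R) by (eapply Rlt_le_trans; [exact Hw|apply Rmin_r]).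
  specialize (H' w Hw1).
  replace (f w - f z) with ((f w - f z - l * (w - z)) + l * (w - z)) by ring.
  eapply Rle_lt_trans. apply Cmod_triangle. rewrite Cmod_mult.
  pose proof (Cmod_ge_0 l). pose proof (Cmod_ge_0 (w - z)).
  assert (Cmod (w - z) * (1 + Cmod l + 1) < eps)%R.
  { apply (Rmult_lt_compat_r (1 + Cmod l + 1)) in Hw2; [|lra].
    unfold Rdiv in Hw2. rewrite Rmult_assoc, Rinv_l in Hw2 by lra. lra. }
  nra.
Qed.

Lemma entire_Ccont f z : entire f -> Ccont f z.
Proof. intros Hf. apply (Cdiff_Ccont f z (D f z)). apply is_derive_Cdiff, entire_D, Hf. Qed.

Lemma Cdiff_inv (w0 : C) : w0 <> 0 -> Cdiff (fun w => / w) w0 (- / (w0 * w0)).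
Proof.
  intros Hw0 eps Heps. assert (Hm : (0 < Cmod w0)%R) by (apply Cmod_gt_0; exact Hw0).
  exists (Rmin (Cmod w0 / 2) (eps * (Cmod w0 * Cmod w0 * Cmod w0) / 2)). split.
  { apply Rmin_pos. lra. apply Rdiv_lt_0_compat; [|lra]. apply Rmult_lt_0_compat. lra.
    apply Rmult_lt_0_compat; [apply Rmult_lt_0_compat|]; lra. }
  intros w Hw. assert (Hw1 : (Cmod (w - w0) < Cmod w0 / 2)%R) by (eapply Rlt_le_trans; [exact Hw|apply Rmin_l]).
  assert (Hw2 : (Cmod (w - w0) < eps * (Cmod w0 * Cmod w0 * Cmod w0) / 2)%R) by (eapply Rlt_le_trans; [exact Hw|apply Rmin_r]).
  assert (Hmw : (Cmod w0 / 2 < Cmod w)%R).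
  { pose proof (Cmod_rev_triang w0 w). rewrite Cmod_sub_sym in H. lra. }
  assert (Hwn : w <> 0). { intro E. subst w. rewrite Cmod_0 in Hmw. lra. }
  replace (/ w - / w0 - - / (w0 * w0) * (w - w0)) with ((w - w0) * (w - w0) / (w * (w0 * w0))).
  2:{ field. split; assumption. }
  rewrite Cmod_div. 2:{ apply Cmult_neq_0; [|apply Cmult_neq_0]; assumption. }
  rewrite !Cmod_mult. pose proof (Cmod_ge_0 (w - w0)).
  apply (Rmult_le_reg_r (Cmod w * (Cmod w0 * Cmod w0))).
  { apply Rmult_lt_0_compat. lra. nra. }
  unfold Rdiv. rewrite Rmult_assoc, Rinv_l. 2:{ apply Rgt_not_eq. apply Rmult_lt_0_compat. lra. nra. }
  rewrite Rmult_1_r.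
  assert (Cmod (w - w0) <= eps * (Cmod w * (Cmod w0 * Cmod w0)))%R.
  { assert (eps * (Cmod w0 * Cmod w0 * Cmod w0) / 2 <= eps * (Cmod w * (Cmod w0 * Cmod w0)))%R.
    { unfold Rdiv. assert (0 < Cmod w0 * Cmod w0)%R by nra.
      assert (Cmod w0 * / 2 <= Cmod w)%R by lra. nra. }
    lra. }
  nra.
Qed.
Open Scope C_scope.

Lemma dpl_bound f x l : derivable_pt_lim f x l ->
  forall eps, (0 < eps)%R -> exists d, (0 < d)%R /\ forall h, (Rabs h < d)%R ->
    (Rabs (f (x + h) - f x - l * h) <= eps * Rabs h)%R.
Proof.
  intros H eps Heps. destruct (H eps Heps) as [d Hd]. exists d. split. apply cond_pos.
  intros h Hh. destruct (Req_dec h 0) as [E|E].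
  { subst h. rewrite Rplus_0_r, Rabs_R0. replace (f x - f x - l * 0)%R with 0%R by ring. rewrite Rabs_R0. lra. }
  specialize (Hd h E Hh).
  replace (f (x + h) - f x - l * h)%R with (((f (x + h) - f x) / h - l) * h)%R by (field; exact E).
  rewrite Rabs_mult. apply Rmult_le_compat_r. apply Rabs_pos. lra.
Qed.

Lemma Cexp_add z h : Cexp (z + h) = Cexp z * Cexp h.
Proof.
  destruct z as [x y], h as [u v]. unfold Cexp, Cmult, Cplus. simpl.
  rewrite exp_plus, cos_plus, sin_plus. Csplit; ring.
Qed.

Lemma Cexp_0 : Cexp 0 = 1.
Proof. unfold Cexp. simpl. rewrite exp_0, cos_0, sin_0. Csplit; simpl; ring. Qed.

Lemma Cexp_small eps : (0 < eps)%R -> exists d, (0 < d)%R /\ forall h,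
  (Cmod h < d)%R -> (Cmod (Cexp h - 1 - h) <= eps * Cmod h)%R.
Proof.
  intros Heps. set (e := Rmin (eps / 8) 1). assert (He : (0 < e)%R) by (unfold e; apply Rmin_pos; lra).
  assert (He8 : (e <= eps / 8)%R) by apply Rmin_l. assert (He1 : (e <= 1)%R) by apply Rmin_r.
  assert (H0 := derivable_pt_lim_exp 0). rewrite exp_0 in H0.
  destruct (dpl_bound _ _ _ H0 e He) as [d1 [Hd1 H1]].
  destruct (dpl_bound _ _ _ (derivable_pt_lim_cos 0) e He) as [d2 [Hd2 H2]].
  destruct (dpl_bound _ _ _ (derivable_pt_lim_sin 0) e He) as [d3 [Hd3 H3]].
  rewrite sin_0, Ropp_0 in H2. rewrite cos_0 in H3. rewrite cos_0 in H2. rewrite sin_0 in H3.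
  set (d4 := Rmin 1 (e / (e + 1))).
  assert (Hd4 : (0 < d4)%R). { unfold d4. apply Rmin_pos. lra. apply Rdiv_lt_0_compat; lra. }
  exists (Rmin (Rmin d1 d2) (Rmin d3 d4)). split.
  { apply Rmin_pos; apply Rmin_pos; lra. }
  intros [x y] Hh.
  pose proof (abs_re_le (x, y)) as Hx. pose proof (abs_im_le (x, y)) as Hy. simpl in Hx, Hy.
  assert (Hm1 := Rmin_l (Rmin d1 d2) (Rmin d3 d4)). assert (Hm2 := Rmin_r (Rmin d1 d2) (Rmin d3 d4)).
  assert (Hm3 := Rmin_l d1 d2). assert (Hm4 := Rmin_r d1 d2). assert (Hm5 := Rmin_l d3 d4). assert (Hm6 := Rmin_r d3 d4).
  assert (Hm7 := Rmin_l 1 (e / (e + 1))). assert (Hm8 := Rmin_r 1 (e / (e + 1))). fold d4 in Hm7, Hm8.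
  specialize (H1 x ltac:(lra)). specialize (H2 y ltac:(lra)). specialize (H3 y ltac:(lra)).
  rewrite Rplus_0_l, exp_0 in H1. rewrite Rplus_0_l in H2, H3.
  assert (Hex : (exp x <= 3)%R).
  { eapply Rle_trans; [|apply exp_le_3]. destruct (Req_dec x 1). subst; lra.
    left. apply exp_increasing. pose proof (Rle_abs x). lra. }
  assert (Hexp : (0 < exp x)%R) by apply exp_pos.
  assert (Hex1 : (Rabs (exp x - 1) <= e)%R).
  { replace (exp x - 1)%R with ((exp x - 1 - 1 * x) + x)%R by ring.
    eapply Rle_trans; [apply Rabs_triang|].
    assert (Rabs x < e / (e + 1))%R by lra.
    assert (Rabs x * (e + 1) < e)%R.
    { apply (Rmult_lt_compat_r (e + 1)) in H; [|lra]. unfold Rdiv in H.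
      rewrite Rmult_assoc, Rinv_l in H by lra. lra. }
    pose proof (Rabs_pos x). nra. }
  assert (Hsin : (Rabs (sin y) <= 2 * Rabs y)%R).
  { replace (sin y) with ((sin y - 0 - 1 * y) + y)%R by ring.
    eapply Rle_trans; [apply Rabs_triang|].
    pose proof (Rabs_pos y). nra. }
  unfold Cexp. simpl.
  eapply Rle_trans. apply Cmod_le_reim. simpl.
  replace (exp x * cos y + - (1) + - x)%R with ((exp x - 1 - 1 * x) + exp x * (cos y - 1 - 0 * y))%R by ring.
  replace (exp x * sin y + - 0 + - y)%R with ((exp x - 1) * sin y + (sin y - 0 - 1 * y))%R by ring.
  assert (A1 : (Rabs ((exp x - 1 - 1 * x) + exp x * (cos y - 1 - 0 * y)) <= e * Rabs x + 3 * (e * Rabs y))%R).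
  { eapply Rle_trans; [apply Rabs_triang|]. rewrite Rabs_mult, (Rabs_right (exp x)) by lra.
    assert (exp x * Rabs (cos y - 1 - 0 * y) <= 3 * (e * Rabs y))%R.
    { apply Rmult_le_compat; try lra. apply Rabs_pos. }
    lra. }
  assert (A2 : (Rabs ((exp x - 1) * sin y + (sin y - 0 - 1 * y)) <= e * (2 * Rabs y) + e * Rabs y)%R).
  { eapply Rle_trans; [apply Rabs_triang|]. rewrite Rabs_mult.
    assert (Rabs (exp x - 1) * Rabs (sin y) <= e * (2 * Rabs y))%R.
    { apply Rmult_le_compat; try lra; apply Rabs_pos. }
    lra. }
  pose proof (Rabs_pos x). pose proof (Rabs_pos y). pose proof (Cmod_ge_0 (x, y)).
  assert (e * Rabs x <= e * Cmod (x, y))%R by (apply Rmult_le_compat_l; lra).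
  assert (e * Rabs y <= e * Cmod (x, y))%R by (apply Rmult_le_compat_l; lra).
  assert (8 * (e * Cmod (x, y)) <= eps * Cmod (x, y))%R.
  { rewrite <- Rmult_assoc. apply Rmult_le_compat_r; lra. }
  assert (0 <= e * Cmod (x, y))%R by (apply Rmult_le_pos; lra).
  clearbody e. eapply Rle_trans. apply Rplus_le_compat; [exact A1|exact A2]. lra.
Qed.

Lemma Cdiff_Cexp z : Cdiff Cexp z (Cexp z).
Proof.
  intros eps Heps.
  assert (Hc : (0 < Cmod (Cexp z) + 1)%R) by (pose proof (Cmod_ge_0 (Cexp z)); lra).
  destruct (Cexp_small (eps / (Cmod (Cexp z) + 1)) ltac:(apply Rdiv_lt_0_compat; lra)) as [d [Hd H]].
  exists d. split. exact Hd. intros w Hw.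
  replace w with (z + (w - z)) at 1 by ring. rewrite Cexp_add.
  replace (Cexp z * Cexp (w - z) - Cexp z - Cexp z * (w - z)) with (Cexp z * (Cexp (w - z) - 1 - (w - z))) by ring.
  rewrite Cmod_mult. specialize (H (w - z) Hw).
  pose proof (Cmod_ge_0 (Cexp z)). pose proof (Cmod_ge_0 (w - z)).
  eapply Rle_trans. apply Rmult_le_compat_l. exact H0. exact H.
  unfold Rdiv. rewrite <- Rmult_assoc.
  apply Rmult_le_compat_r. lra.
  rewrite (Rmult_comm (Cmod (Cexp z))), Rmult_assoc. rewrite <- (Rmult_1_r eps) at 2.
  apply Rmult_le_compat_l. lra.
  apply (Rmult_le_reg_l (Cmod (Cexp z) + 1)). lra.
  rewrite <- Rmult_assoc, Rinv_r by lra. lra.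
Qed.
Open Scope C_scope.

Lemma RIplus (f g : R -> R) a b : ex_RInt f a b -> ex_RInt g a b ->
  RInt (fun x => f x + g x)%R a b = (RInt f a b + RInt g a b)%R.
Proof. intros. exact (RInt_plus (V:=R_CompleteNormedModule) f g a b H H0). Qed.
Lemma RIminus (f g : R -> R) a b : ex_RInt f a b -> ex_RInt g a b ->
  RInt (fun x => f x - g x)%R a b = (RInt f a b - RInt g a b)%R.
Proof. intros. exact (RInt_minus (V:=R_CompleteNormedModule) f g a b H H0). Qed.
Lemma RIscal (f : R -> R) a b l : ex_RInt f a b ->
  RInt (fun x => l * f x)%R a b = (l * RInt f a b)%R.
Proof. intros. exact (RInt_scal (V:=R_CompleteNormedModule) f a b l H). Qed.
Lemma RIconst a b c : RInt (fun _ => c) a b = ((b - a) * c)%R.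
Proof. exact (RInt_const (V:=R_CompleteNormedModule) a b c). Qed.
Lemma exRIplus (f g : R -> R) a b : ex_RInt f a b -> ex_RInt g a b -> ex_RInt (fun x => f x + g x)%R a b.
Proof. intros. exact (ex_RInt_plus (V:=R_CompleteNormedModule) f g a b H H0). Qed.
Lemma exRIminus (f g : R -> R) a b : ex_RInt f a b -> ex_RInt g a b -> ex_RInt (fun x => f x - g x)%R a b.
Proof. intros. exact (ex_RInt_minus (V:=R_CompleteNormedModule) f g a b H H0). Qed.
Lemma exRIscal (f : R -> R) a b l : ex_RInt f a b -> ex_RInt (fun x => l * f x)%R a b.
Proof. intros. exact (ex_RInt_scal (V:=R_CompleteNormedModule) f a b l H). Qed.

Definition CI (phi : R -> C) (a b : R) : C :=
  (RInt (fun t => fst (phi t)) a b, RInt (fun t => snd (phi t)) a b).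
Definition CIok (phi : R -> C) (a b : R) : Prop :=
  ex_RInt (fun t => fst (phi t)) a b /\ ex_RInt (fun t => snd (phi t)) a b.

Lemma CIok_plus phi psi a b : CIok phi a b -> CIok psi a b -> CIok (fun t => phi t + psi t) a b.
Proof. intros [H1 H2] [H3 H4]. split; simpl; apply exRIplus; assumption. Qed.
Lemma CIok_scal (c : C) phi a b : CIok phi a b -> CIok (fun t => c * phi t) a b.
Proof. intros [H1 H2]. split; simpl.
  apply exRIminus; apply exRIscal; assumption. apply exRIplus; apply exRIscal; assumption. Qed.
Lemma CIok_minus phi psi a b : CIok phi a b -> CIok psi a b -> CIok (fun t => phi t - psi t) a b.
Proof. intros [H1 H2] [H3 H4]. split; simpl.
  apply exRIplus; [assumption|]. apply (ex_RInt_ext (fun t => -1 * fst (psi t))%R). intros; simpl; ring.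
  apply exRIscal; assumption.
  apply exRIplus; [assumption|]. apply (ex_RInt_ext (fun t => -1 * snd (psi t))%R). intros; simpl; ring.
  apply exRIscal; assumption. Qed.

Lemma CI_plus phi psi a b : CIok phi a b -> CIok psi a b ->
  CI (fun t => phi t + psi t) a b = CI phi a b + CI psi a b.
Proof. intros [H1 H2] [H3 H4]. unfold CI. Csplit.
  apply RIplus; assumption. apply RIplus; assumption. Qed.

Lemma CI_scal (c : C) phi a b : CIok phi a b -> CI (fun t => c * phi t) a b = c * CI phi a b.
Proof. intros [H1 H2]. unfold CI. destruct c as [c1 c2]. Csplit.
  rewrite RIminus by (apply exRIscal; assumption). rewrite !RIscal by assumption. reflexivity.
  rewrite RIplus by (apply exRIscal; assumption). rewrite !RIscal by assumption. reflexivity. Qed.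

Lemma CI_opp phi a b : CIok phi a b -> CI (fun t => - phi t) a b = - CI phi a b.
Proof. intros H. transitivity (CI (fun t => (-1) * phi t) a b).
  unfold CI. f_equal; apply RInt_ext; intros; simpl; ring.
  rewrite CI_scal by exact H. ring. Qed.

Lemma CI_minus phi psi a b : CIok phi a b -> CIok psi a b ->
  CI (fun t => phi t - psi t) a b = CI phi a b - CI psi a b.
Proof. intros H1 H2. unfold Cminus. rewrite CI_plus. rewrite CI_opp by exact H2. reflexivity.
  exact H1. split; simpl. apply (ex_RInt_ext (fun t => -1 * fst (psi t))%R). intros; simpl; ring.
  apply exRIscal; apply H2. apply (ex_RInt_ext (fun t => -1 * snd (psi t))%R). intros; simpl; ring.
  apply exRIscal; apply H2. Qed.

Lemma CI_const (c : C) a b : CI (fun _ => c) a b = c * RtoC (b - a).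
Proof. unfold CI. rewrite !RIconst. destruct c. Csplit; simpl; ring. Qed.

Lemma CI_ext phi psi a b : (forall t, (Rmin a b <= t <= Rmax a b)%R -> phi t = psi t) ->
  CI phi a b = CI psi a b.
Proof. intros H. unfold CI. f_equal; apply RInt_ext; intros x Hx; rewrite H; try reflexivity; lra. Qed.

Lemma CI_Chasles phi a b c : CIok phi a b -> CIok phi b c -> CI phi a b + CI phi b c = CI phi a c.
Proof. intros [H1 H2] [H3 H4]. unfold CI. Csplit.
  exact (RInt_Chasles (V:=R_CompleteNormedModule) _ a b c H1 H3).
  exact (RInt_Chasles (V:=R_CompleteNormedModule) _ a b c H2 H4). Qed.

Lemma CI_point phi a : CI phi a a = 0.
Proof. unfold CI. rewrite !(RInt_point (V:=R_CompleteNormedModule)). reflexivity. Qed.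

Lemma RI_comp_lin (f : R -> R) (u v a b : R) : ex_RInt f (u * a + v) (u * b + v) ->
  RInt f (u * a + v) (u * b + v) = (u * RInt (fun y => f (u * y + v)%R) a b)%R.
Proof.
  intros Hf. rewrite <- (RInt_comp_lin (V:=R_CompleteNormedModule) f u v a b Hf).
  rewrite (RInt_scal (V:=R_CompleteNormedModule)). reflexivity.
  destruct (Req_dec u 0) as [Hu|Hu].
  - subst u. apply (ex_RInt_ext (fun _ => f v)). intros; f_equal; ring. apply ex_RInt_const.
  - apply (ex_RInt_comp_lin f u v a b) in Hf. apply (ex_RInt_ext (fun y => / u * scal u (f (u * y + v)%R))%R).
    intros; unfold scal; simpl; unfold mult; simpl. field. exact Hu.
    apply exRIscal. exact Hf.
Qed.

Lemma CI_comp_lin phi (u v a b : R) : CIok phi (u * a + v) (u * b + v) ->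
  CI (fun t => phi (u * t + v)%R) a b * RtoC u = CI phi (u * a + v) (u * b + v).
Proof. intros [H1 H2]. unfold CI.
  rewrite (RI_comp_lin _ u v a b H1), (RI_comp_lin _ u v a b H2).
  Csplit; simpl; ring. Qed.

Definition RCc (phi : R -> C) (t : R) : Prop :=
  forall eps : R, (0 < eps)%R -> exists delta : R, (0 < delta)%R /\
    forall s, (Rabs (s - t) < delta)%R -> (Cmod (phi s - phi t) < eps)%R.

Lemma RCc_fst phi t : RCc phi t -> continuous (fun s => fst (phi s)) t.
Proof.
  intros H. apply continuity_pt_filterlim. intros eps Heps.
  destruct (H eps Heps) as [d [Hd H']]. exists d. split. exact Hd.
  intros x [_ Hx]. unfold R_dist in *. simpl in *. specialize (H' x Hx).
  eapply Rle_lt_trans; [|exact H']. pose proof (abs_re_le (phi x - phi t)).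
  destruct (phi x), (phi t). simpl in *. exact H0.
Qed.
Lemma RCc_snd phi t : RCc phi t -> continuous (fun s => snd (phi s)) t.
Proof.
  intros H. apply continuity_pt_filterlim. intros eps Heps.
  destruct (H eps Heps) as [d [Hd H']]. exists d. split. exact Hd.
  intros x [_ Hx]. unfold R_dist in *. simpl in *. specialize (H' x Hx).
  eapply Rle_lt_trans; [|exact H']. pose proof (abs_im_le (phi x - phi t)).
  destruct (phi x), (phi t). simpl in *. exact H0.
Qed.

Lemma RCc_CIok phi a b : (forall t, (Rmin a b <= t <= Rmax a b)%R -> RCc phi t) -> CIok phi a b.
Proof. intros H. split; apply (ex_RInt_continuous (V:=R_CompleteNormedModule)); intros z Hz.
  apply RCc_fst, H, Hz. apply RCc_snd, H, Hz. Qed.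

Lemma CI_bound phi a b M : (a <= b)%R -> CIok phi a b ->
  (forall t, (a <= t <= b)%R -> (Cmod (phi t) <= M)%R) -> (Cmod (CI phi a b) <= 2 * (b - a) * M)%R.
Proof.
  intros Hab [H1 H2] HM. unfold CI. eapply Rle_trans. apply Cmod_le_abs.
  assert (A1 := abs_RInt_le_const (fun t => fst (phi t)) a b M Hab H1).
  assert (A2 := abs_RInt_le_const (fun t => snd (phi t)) a b M Hab H2).
  assert (B1 : (Rabs (RInt (fun t => fst (phi t)) a b) <= (b - a) * M)%R).
  { apply A1. intros t Ht. eapply Rle_trans; [apply abs_re_le|]. apply HM; exact Ht. }
  assert (B2 : (Rabs (RInt (fun t => snd (phi t)) a b) <= (b - a) * M)%R).
  { apply A2. intros t Ht. eapply Rle_trans; [apply abs_im_le|]. apply HM; exact Ht. }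
  lra.
Qed.

Definition RDiff (phi : R -> C) (t : R) (l : C) : Prop :=
  forall eps : R, (0 < eps)%R -> exists delta : R, (0 < delta)%R /\
    forall s, (Rabs (s - t) < delta)%R -> (Cmod (phi s - phi t - RtoC (s - t) * l) <= eps * Rabs (s - t))%R.

Lemma RDiff_fst phi t l : RDiff phi t l -> is_derive (fun s => fst (phi s)) t (fst l).
Proof.
  intros H. apply is_derive_Reals. intros eps Heps.
  destruct (H (eps / 2)%R ltac:(lra)) as [d [Hd H']]. exists (mkposreal d Hd).
  intros h Hh0 Hh. simpl in Hh. specialize (H' (t + h)%R). replace (t + h - t)%R with h in H' by ring.
  specialize (H' Hh). pose proof (abs_re_le (phi (t + h)%R - phi t - RtoC h * l)) as E.
  replace ((fst (phi (t + h)%R) - fst (phi t)) / h - fst l)%R with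
    (fst ((phi (t + h)%R - phi t - RtoC h * l)%C) / h)%R.
  2:{ destruct (phi (t + h)%R), (phi t), l. simpl. field. exact Hh0. }
  unfold Rdiv. rewrite Rabs_mult, Rabs_inv. apply (Rmult_lt_reg_r (Rabs h)). apply Rabs_pos_lt; exact Hh0.
  rewrite Rmult_assoc, Rinv_l. 2:{ apply Rabs_no_R0; exact Hh0. }
  assert (0 < Rabs h)%R by (apply Rabs_pos_lt; exact Hh0). nra.
Qed.
Lemma RDiff_snd phi t l : RDiff phi t l -> is_derive (fun s => snd (phi s)) t (snd l).
Proof.
  intros H. apply is_derive_Reals. intros eps Heps.
  destruct (H (eps / 2)%R ltac:(lra)) as [d [Hd H']]. exists (mkposreal d Hd).
  intros h Hh0 Hh. simpl in Hh. specialize (H' (t + h)%R). replace (t + h - t)%R with h in H' by ring.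
  specialize (H' Hh). pose proof (abs_im_le (phi (t + h)%R - phi t - RtoC h * l)) as E.
  replace ((snd (phi (t + h)%R) - snd (phi t)) / h - snd l)%R with
    (snd ((phi (t + h)%R - phi t - RtoC h * l)%C) / h)%R.
  2:{ destruct (phi (t + h)%R), (phi t), l. simpl. field. exact Hh0. }
  unfold Rdiv. rewrite Rabs_mult, Rabs_inv. apply (Rmult_lt_reg_r (Rabs h)). apply Rabs_pos_lt; exact Hh0.
  rewrite Rmult_assoc, Rinv_l. 2:{ apply Rabs_no_R0; exact Hh0. }
  assert (0 < Rabs h)%R by (apply Rabs_pos_lt; exact Hh0). nra.
Qed.

Lemma CI_FTC Phi dPhi a b : (forall t, (Rmin a b <= t <= Rmax a b)%R -> RDiff Phi t (dPhi t)) ->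
  (forall t, (Rmin a b <= t <= Rmax a b)%R -> RCc dPhi t) -> CI dPhi a b = Phi b - Phi a.
Proof.
  intros H1 H2. unfold CI. Csplit.
  - apply is_RInt_unique. apply (is_RInt_derive (V:=R_CompleteNormedModule) (fun s => fst (Phi s))).
    intros; apply RDiff_fst, H1; assumption. intros; apply RCc_fst, H2; assumption.
  - apply is_RInt_unique. apply (is_RInt_derive (V:=R_CompleteNormedModule) (fun s => snd (Phi s))).
    intros; apply RDiff_snd, H1; assumption. intros; apply RCc_snd, H2; assumption.
Qed.
Open Scope C_scope.

Lemma Cdiff_eql f z l1 l2 : l1 = l2 -> Cdiff f z l1 -> Cdiff f z l2.
Proof. intros ->; auto. Qed.
Lemma Cdiff_const (c z : C) : Cdiff (fun _ => c) z 0.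
Proof. intros eps Heps. exists 1%R. split. lra. intros w _.
  replace (c - c - 0 * (w - z)) with (RtoC 0) by ring. rewrite Cmod_0.
  pose proof (Cmod_ge_0 (w - z)). nra. Qed.
Lemma Cdiff_id (z : C) : Cdiff (fun w => w) z 1.
Proof. intros eps Heps. exists 1%R. split. lra. intros w _.
  replace (w - z - 1 * (w - z)) with (RtoC 0) by ring. rewrite Cmod_0.
  pose proof (Cmod_ge_0 (w - z)). nra. Qed.
Lemma Cdiff_plus f g z lf lg : Cdiff f z lf -> Cdiff g z lg -> Cdiff (fun w => f w + g w) z (lf + lg).
Proof. intros H1 H2. apply is_derive_Cdiff. apply Cdiff_is_derive in H1. apply Cdiff_is_derive in H2.
  apply (is_derive_plus (K:=C_AbsRing) (V:=C_NormedModule) f g z lf lg H1 H2). Qed.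
Lemma Cdiff_mult f g z lf lg : Cdiff f z lf -> Cdiff g z lg -> Cdiff (fun w => f w * g w) z (lf * g z + f z * lg).
Proof. intros H1 H2. apply is_derive_Cdiff'. apply Cdiff_is_derive' in H1. apply Cdiff_is_derive' in H2.
  apply (is_derive_mult (K:=C_AbsRing) f g z lf lg H1 H2). intros; apply Cmult_comm. Qed.
Lemma Cdiff_comp f g z lf lg : Cdiff f (g z) lf -> Cdiff g z lg -> Cdiff (fun w => f (g w)) z (lg * lf).
Proof. intros H1 H2. apply is_derive_Cdiff. apply Cdiff_is_derive in H1. apply Cdiff_is_derive' in H2.
  apply (is_derive_comp (K:=C_AbsRing) (V:=C_NormedModule) f g z lf lg H1 H2). Qed.
Lemma Cdiff_ext f g z l : (forall w, f w = g w) -> Cdiff f z l -> Cdiff g z l.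
Proof. intros E H. apply (Cdiff_loc g f z l 1). lra. intros; symmetry; apply E. exact H. Qed.

Lemma RCc_const (c : C) t : RCc (fun _ => c) t.
Proof. intros eps Heps. exists 1%R. split. lra. intros. unfold Cminus. rewrite Cplus_opp_r, Cmod_0. exact Heps. Qed.

Lemma RCc_plus phi psi t : RCc phi t -> RCc psi t -> RCc (fun s => phi s + psi s) t.
Proof.
  intros H1 H2 eps Heps. destruct (H1 (eps/2)%R ltac:(lra)) as [d1 [Hd1 H1']].
  destruct (H2 (eps/2)%R ltac:(lra)) as [d2 [Hd2 H2']].
  exists (Rmin d1 d2). split. apply Rmin_pos; lra. intros s Hs.
  specialize (H1' s ltac:(eapply Rlt_le_trans; [exact Hs|apply Rmin_l])).
  specialize (H2' s ltac:(eapply Rlt_le_trans; [exact Hs|apply Rmin_r])).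
  replace (phi s + psi s - (phi t + psi t)) with ((phi s - phi t) + (psi s - psi t)) by ring.
  eapply Rle_lt_trans. apply Cmod_triangle. lra.
Qed.

Lemma RCc_mult phi psi t : RCc phi t -> RCc psi t -> RCc (fun s => phi s * psi s) t.
Proof.
  intros H1 H2 eps Heps.
  set (A := (Cmod (phi t) + 1)%R). set (B := (Cmod (psi t) + 1)%R).
  assert (HA : (0 < A)%R) by (unfold A; pose proof (Cmod_ge_0 (phi t)); lra).
  assert (HB : (0 < B)%R) by (unfold B; pose proof (Cmod_ge_0 (psi t)); lra).
  set (e := Rmin 1 (eps / (A + B + 1))).
  assert (He : (0 < e)%R) by (unfold e; apply Rmin_pos; [lra|apply Rdiv_lt_0_compat; lra]).
  assert (He1 : (e <= 1)%R) by apply Rmin_l.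
  assert (He2 : (e * (A + B + 1) <= eps)%R).
  { unfold e. apply (Rmult_le_reg_r (/ (A + B + 1))). apply Rinv_0_lt_compat; lra.
    rewrite Rmult_assoc, Rinv_r by lra. rewrite Rmult_1_r. apply Rmin_r. }
  destruct (H1 e He) as [d1 [Hd1 H1']]. destruct (H2 e He) as [d2 [Hd2 H2']].
  exists (Rmin d1 d2). split. apply Rmin_pos; lra. intros s Hs.
  specialize (H1' s ltac:(eapply Rlt_le_trans; [exact Hs|apply Rmin_l])).
  specialize (H2' s ltac:(eapply Rlt_le_trans; [exact Hs|apply Rmin_r])).
  replace (phi s * psi s - phi t * psi t) with
    ((phi s - phi t) * (psi s - psi t) + (phi s - phi t) * psi t + phi t * (psi s - psi t)) by ring.
  eapply Rle_lt_trans. apply Cmod_triang3. rewrite !Cmod_mult.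
  pose proof (Cmod_ge_0 (phi s - phi t)). pose proof (Cmod_ge_0 (psi s - psi t)).
  pose proof (Cmod_ge_0 (phi t)). pose proof (Cmod_ge_0 (psi t)).
  assert (Cmod (phi s - phi t) * Cmod (psi s - psi t) < e * 1)%R.
  { apply Rle_lt_trans with (e * Cmod (psi s - psi t))%R. apply Rmult_le_compat_r; lra.
    apply Rmult_lt_compat_l; lra. }
  assert (Cmod (phi s - phi t) * Cmod (psi t) <= e * B)%R.
  { apply Rmult_le_compat; try lra. unfold B; lra. }
  assert (Cmod (phi t) * Cmod (psi s - psi t) <= A * e)%R.
  { apply Rmult_le_compat; try lra. unfold A; lra. }
  lra.
Qed.

Lemma RCc_opp phi t : RCc phi t -> RCc (fun s => - phi s) t.
Proof. intros H. apply (RCc_mult (fun _ => -1) phi t) in H; [|apply RCc_const].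
  intros eps Heps. destruct (H eps Heps) as [d [Hd H']]. exists d. split; auto. intros s Hs.
  specialize (H' s Hs). replace (- phi s - - phi t) with (-1 * phi s - -1 * phi t) by ring. exact H'. Qed.

Lemma RCc_minus phi psi t : RCc phi t -> RCc psi t -> RCc (fun s => phi s - psi s) t.
Proof. intros H1 H2. apply (RCc_plus phi (fun s => - psi s)); [exact H1|apply RCc_opp, H2]. Qed.

Lemma RCc_comp (g : C -> C) phi t : Ccont g (phi t) -> RCc phi t -> RCc (fun s => g (phi s)) t.
Proof.
  intros H1 H2 eps Heps. destruct (H1 eps Heps) as [d1 [Hd1 H1']].
  destruct (H2 d1 Hd1) as [d2 [Hd2 H2']]. exists d2. split. exact Hd2.
  intros s Hs. apply H1'. apply H2'. exact Hs.
Qed.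

Lemma Ccont_inv (w0 : C) : w0 <> 0 -> Ccont (fun w => / w) w0.
Proof. intros H. apply (Cdiff_Ccont _ _ _ (Cdiff_inv w0 H)). Qed.

Lemma RCc_inv (phi : R -> C) t : phi t <> 0 -> RCc phi t -> RCc (fun s => / phi s) t.
Proof. intros H0 H. apply (RCc_comp (fun w => / w) phi t). apply Ccont_inv, H0. exact H. Qed.

Lemma RDiff_RCc phi t l : RDiff phi t l -> RCc phi t.
Proof.
  intros H eps Heps. destruct (H 1%R Rlt_0_1) as [d [Hd H']].
  set (K := (Cmod l + 1 + 1)%R). assert (HK : (0 < K)%R) by (unfold K; pose proof (Cmod_ge_0 l); lra).
  exists (Rmin d (eps / K)). split. apply Rmin_pos. lra. apply Rdiv_lt_0_compat; lra.
  intros s Hs. assert (Hs1 : (Rabs (s - t) < d)%R) by (eapply Rlt_le_trans; [exact Hs|apply Rmin_l]).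
  assert (Hs2 : (Rabs (s - t) < eps / K)%R) by (eapply Rlt_le_trans; [exact Hs|apply Rmin_r]).
  specialize (H' s Hs1).
  replace (phi s - phi t) with ((phi s - phi t - RtoC (s - t) * l) + RtoC (s - t) * l) by ring.
  eapply Rle_lt_trans. apply Cmod_triangle. rewrite Cmod_mult, Cmod_R.
  assert (Rabs (s - t) * K < eps)%R.
  { apply (Rmult_lt_compat_r K) in Hs2; [|lra]. unfold Rdiv in Hs2.
    rewrite Rmult_assoc, Rinv_l in Hs2 by lra. lra. }
  pose proof (Rabs_pos (s - t)). unfold K in *. pose proof (Cmod_ge_0 l). nra.
Qed.

Lemma RCc_RtoC (u v : R) t : RCc (fun s => RtoC (u * s + v)) t.
Proof.
  intros eps Heps. exists (eps / (Rabs u + 1))%R. split. apply Rdiv_lt_0_compat. lra. pose proof (Rabs_pos u); lra.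
  intros s Hs. rewrite <- RtoC_minus, Cmod_R.
  replace (u * s + v - (u * t + v))%R with (u * (s - t))%R by ring. rewrite Rabs_mult.
  pose proof (Rabs_pos u). pose proof (Rabs_pos (s - t)).
  apply (Rmult_lt_compat_r (Rabs u + 1)) in Hs; [|lra]. unfold Rdiv in Hs.
  rewrite Rmult_assoc, Rinv_l in Hs by lra. nra.
Qed.

Lemma RDiff_comp (G : C -> C) gam t l v : Cdiff G (gam t) l -> RDiff gam t v ->
  RDiff (fun s => G (gam s)) t (v * l).
Proof.
  intros HG Hg eps Heps.
  set (Kv := (Cmod v + 1)%R). set (Kl := (Cmod l + 1)%R).
  assert (HKv : (0 < Kv)%R) by (unfold Kv; pose proof (Cmod_ge_0 v); lra).
  assert (HKl : (0 < Kl)%R) by (unfold Kl; pose proof (Cmod_ge_0 l); lra).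
  destruct (HG (eps / (2 * Kv))%R ltac:(apply Rdiv_lt_0_compat; lra)) as [d1 [Hd1 H1]].
  destruct (Hg (eps / (2 * Kl))%R ltac:(apply Rdiv_lt_0_compat; lra)) as [d2 [Hd2 H2]].
  destruct (Hg 1%R Rlt_0_1) as [d3 [Hd3 H3]].
  exists (Rmin (Rmin d2 d3) (d1 / Kv)). split.
  { apply Rmin_pos. apply Rmin_pos; lra. apply Rdiv_lt_0_compat; lra. }
  intros s Hs.
  assert (Hs2 : (Rabs (s - t) < d2)%R) by (eapply Rlt_le_trans; [exact Hs|]; eapply Rle_trans; [apply Rmin_l|apply Rmin_l]).
  assert (Hs3 : (Rabs (s - t) < d3)%R) by (eapply Rlt_le_trans; [exact Hs|]; eapply Rle_trans; [apply Rmin_l|apply Rmin_r]).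
  assert (Hs1 : (Rabs (s - t) < d1 / Kv)%R) by (eapply Rlt_le_trans; [exact Hs|apply Rmin_r]).
  specialize (H2 s Hs2). specialize (H3 s Hs3).
  pose proof (Rabs_pos (s - t)) as Hp.
  assert (Hgs : (Cmod (gam s - gam t) <= Kv * Rabs (s - t))%R).
  { replace (gam s - gam t) with ((gam s - gam t - RtoC (s - t) * v) + RtoC (s - t) * v) by ring.
    eapply Rle_trans. apply Cmod_triangle. rewrite Cmod_mult, Cmod_R. unfold Kv. nra. }
  assert (Hgs1 : (Cmod (gam s - gam t) < d1)%R).
  { eapply Rle_lt_trans. exact Hgs. apply (Rmult_lt_compat_l Kv) in Hs1; [|lra].
    unfold Rdiv in Hs1. rewrite (Rmult_comm d1), <- Rmult_assoc, Rinv_r, Rmult_1_l in Hs1 by lra. exact Hs1. }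
  specialize (H1 (gam s) Hgs1).
  replace (G (gam s) - G (gam t) - RtoC (s - t) * (v * l)) with
    ((G (gam s) - G (gam t) - l * (gam s - gam t)) + l * (gam s - gam t - RtoC (s - t) * v)) by ring.
  eapply Rle_trans. apply Cmod_triangle. rewrite Cmod_mult.
  assert (E1 : (eps / (2 * Kv) * Cmod (gam s - gam t) <= eps / 2 * Rabs (s - t))%R).
  { apply Rle_trans with (eps / (2 * Kv) * (Kv * Rabs (s - t)))%R.
    apply Rmult_le_compat_l. apply Rlt_le, Rdiv_lt_0_compat; lra. exact Hgs.
    right. field. lra. }
  assert (E2 : (Cmod l * Cmod (gam s - gam t - RtoC (s - t) * v) <= eps / 2 * Rabs (s - t))%R).
  { apply Rle_trans with (Kl * (eps / (2 * Kl) * Rabs (s - t)))%R.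
    apply Rmult_le_compat. apply Cmod_ge_0. apply Cmod_ge_0. unfold Kl; lra. exact H2.
    right. field. lra. }
  lra.
Qed.

Lemma RDiff_of_comps phi t l :
  derivable_pt_lim (fun s => fst (phi s)) t (fst l) -> derivable_pt_lim (fun s => snd (phi s)) t (snd l) ->
  RDiff phi t l.
Proof.
  intros H1 H2 eps Heps.
  destruct (dpl_bound _ _ _ H1 (eps/2)%R ltac:(lra)) as [d1 [Hd1 H1']].
  destruct (dpl_bound _ _ _ H2 (eps/2)%R ltac:(lra)) as [d2 [Hd2 H2']].
  exists (Rmin d1 d2). split. apply Rmin_pos; lra. intros s Hs.
  specialize (H1' (s - t)%R ltac:(eapply Rlt_le_trans; [exact Hs|apply Rmin_l])).
  specialize (H2' (s - t)%R ltac:(eapply Rlt_le_trans; [exact Hs|apply Rmin_r])).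
  replace (t + (s - t))%R with s in H1', H2' by ring.
  eapply Rle_trans. apply Cmod_le_reim.
  destruct (phi s) as [p1 p2], (phi t) as [q1 q2], l as [l1 l2]. simpl in *.
  replace (p1 + - q1 + - ((s - t) * l1 - 0 * l2))%R with (p1 - q1 - l1 * (s - t))%R by ring.
  replace (p2 + - q2 + - ((s - t) * l2 + 0 * l1))%R with (p2 - q2 - l2 * (s - t))%R by ring.
  lra.
Qed.

Definition gam (t : R) : C := (cos t, sin t).

Lemma RDiff_gam t : RDiff gam t (Ci * gam t).
Proof.
  apply RDiff_of_comps; unfold gam; simpl.
  replace (0 * cos t - 1 * sin t)%R with (- sin t)%R by ring. apply derivable_pt_lim_cos.
  replace (0 * sin t + 1 * cos t)%R with (cos t)%R by ring. apply derivable_pt_lim_sin.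
Qed.

Lemma RCc_gam t : RCc gam t.
Proof. exact (RDiff_RCc _ _ _ (RDiff_gam t)). Qed.

Lemma Cmod_gam t : Cmod (gam t) = 1%R.
Proof. unfold Cmod, gam. simpl. rewrite !Rmult_1_r.
  replace (cos t * cos t + sin t * sin t)%R with 1%R. apply sqrt_1.
  pose proof (sin2_cos2 t). unfold Rsqr in H. lra. Qed.

Lemma gam_2PI : gam (2 * PI) = gam 0.
Proof. unfold gam. rewrite cos_2PI, sin_2PI, cos_0, sin_0. reflexivity. Qed.
Open Scope C_scope.

Ltac Cbrute := apply injective_projections; simpl; field.

Definition SI (g : C -> C) (p q : C) : C :=
  CI (fun t => g (p + RtoC t * (q - p))) 0 1 * (q - p).

Definition I3 (g : C -> C) (a b c : C) : C := SI g a b + SI g b c + SI g c a.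

Lemma RCc_id t : RCc (fun s => RtoC s) t.
Proof. replace (fun s => RtoC s) with (fun s => RtoC (1 * s + 0)%R).
  apply RCc_RtoC. apply functional_extensionality; intros; f_equal; ring. Qed.

Lemma RCc_line (p u : C) t : RCc (fun s => p + RtoC s * u) t.
Proof. apply RCc_plus. apply RCc_const. apply RCc_mult. apply RCc_id. apply RCc_const. Qed.

Lemma CIok_line g p u a b : (forall w, Ccont g w) -> CIok (fun t => g (p + RtoC t * u)) a b.
Proof. intros Hg. apply RCc_CIok. intros t _. apply (RCc_comp g (fun s => p + RtoC s * u)).
  apply Hg. apply RCc_line. Qed.

Lemma SI_line g p u x1 x2 q1 q2 : (forall w, Ccont g w) ->
  q1 = p + RtoC x1 * u -> q2 = p + RtoC x2 * u ->
  SI g q1 q2 = u * CI (fun x => g (p + RtoC x * u)) x1 x2.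
Proof.
  intros Hg -> ->. unfold SI.
  set (h := fun x : R => g (p + RtoC x * u)).
  replace (fun t : R => g (p + RtoC x1 * u + RtoC t * (p + RtoC x2 * u - (p + RtoC x1 * u))))
    with (fun t : R => h ((x2 - x1) * t + x1)%R).
  2:{ apply functional_extensionality; intros t. unfold h. f_equal. Cbrute. }
  assert (E := CI_comp_lin h (x2 - x1) x1 0 1).
  replace ((x2 - x1) * 0 + x1)%R with x1 in E by ring.
  replace ((x2 - x1) * 1 + x1)%R with x2 in E by ring.
  rewrite <- E. 2:{ apply CIok_line; exact Hg. }
  replace (p + RtoC x2 * u - (p + RtoC x1 * u)) with (RtoC (x2 - x1) * u) by Cbrute.
  ring.
Qed.

Lemma SI_split g p q r : (forall w, Ccont g w) ->
  SI g p q = SI g p (p + RtoC r * (q - p)) + SI g (p + RtoC r * (q - p)) q.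
Proof.
  intros Hg.
  rewrite (SI_line g p (q - p) 0 1 p q) by (auto; Cbrute).
  rewrite (SI_line g p (q - p) 0 r p (p + RtoC r * (q - p))) by (auto; Cbrute).
  rewrite (SI_line g p (q - p) r 1 (p + RtoC r * (q - p)) q) by (auto; Cbrute).
  rewrite <- (CI_Chasles _ 0 r 1) by (apply CIok_line; exact Hg). ring.
Qed.

Lemma SI_rev g p q : (forall w, Ccont g w) -> SI g q p = - SI g p q.
Proof.
  intros Hg.
  rewrite (SI_line g p (q - p) 0 1 p q) by (auto; Cbrute).
  rewrite (SI_line g p (q - p) 1 0 q p) by (auto; Cbrute).
  assert (E := CI_Chasles (fun x => g (p + RtoC x * (q - p))) 0 1 0).
  rewrite CI_point in E. 
  assert (CI (fun x => g (p + RtoC x * (q - p))) 1 0 = - CI (fun x => g (p + RtoC x * (q - p))) 0 1).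
  { rewrite <- (Cplus_0_l (- _)). rewrite <- E by (apply CIok_line; exact Hg). ring. }
  rewrite H. ring.
Qed.

Lemma SI_same g p : SI g p p = 0.
Proof. unfold SI. replace (p - p) with (RtoC 0) by ring. ring. Qed.

Lemma I3_line g p u x y z : (forall w, Ccont g w) ->
  I3 g (p + RtoC x * u) (p + RtoC y * u) (p + RtoC z * u) = 0.
Proof.
  intros Hg. unfold I3.
  rewrite (SI_line g p u x y) by auto. rewrite (SI_line g p u y z) by auto.
  rewrite (SI_line g p u z x) by auto.
  rewrite <- Cmult_plus_distr_l, <- Cmult_plus_distr_l.
  rewrite (CI_Chasles _ x y z) by (apply CIok_line; exact Hg).
  rewrite (CI_Chasles _ x z x) by (apply CIok_line; exact Hg).
  rewrite CI_point. ring.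
Qed.

Lemma CI_id01 : CI (fun t => RtoC t) 0 1 = RtoC (/ 2).
Proof.
  unfold CI. simpl. rewrite RIconst. Csplit; [|simpl; ring].
  apply is_RInt_unique.
  replace (/ 2)%R with ((fun t => t * t / 2) 1 - (fun t => t * t / 2) 0)%R by (simpl; field).
  apply (is_RInt_derive (V:=R_CompleteNormedModule) (fun t => t * t / 2)%R (fun t => t)).
  intros x _. auto_derive. auto. field.
  intros x _. apply continuity_pt_filterlim. apply continuity_pt_id.
Qed.

Lemma CI_id01' : CI RtoC 0 1 = RtoC (/ 2).
Proof. exact CI_id01. Qed.

Lemma SI_affine (al be p q : C) : SI (fun w => al + be * w) p q = (al + be * p + be * (q - p) * RtoC (/2)) * (q - p).
Proof.
  unfold SI. f_equal.
  replace (fun t : R => al + be * (p + RtoC t * (q - p))) with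
    (fun t : R => (al + be * p) + (be * (q - p)) * RtoC t).
  2:{ apply functional_extensionality; intros; ring. }
  rewrite CI_plus. rewrite CI_const, CI_scal, ?CI_id01, ?CI_id01'.
  replace (1 - 0)%R with 1%R by ring. ring.
  apply RCc_CIok; intros; apply RCc_id.
  apply RCc_CIok; intros; apply RCc_const.
  apply CIok_scal. apply RCc_CIok; intros; apply RCc_id.
Qed.

Lemma I3_affine al be a b c : I3 (fun w => al + be * w) a b c = 0.
Proof. unfold I3. rewrite !SI_affine. Cbrute. Qed.

Lemma SI_minus g1 g2 p q : (forall w, Ccont g1 w) -> (forall w, Ccont g2 w) ->
  SI (fun w => g1 w - g2 w) p q = SI g1 p q - SI g2 p q.
Proof. intros H1 H2. unfold SI. rewrite CI_minus. ring.
  apply CIok_line; auto. apply CIok_line; auto. Qed.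

Lemma I3_minus g1 g2 a b c : (forall w, Ccont g1 w) -> (forall w, Ccont g2 w) ->
  I3 (fun w => g1 w - g2 w) a b c = I3 g1 a b c - I3 g2 a b c.
Proof. intros H1 H2. unfold I3. rewrite !SI_minus by auto. ring. Qed.

Lemma SI_bound g (p q : C) M : (forall w, Ccont g w) ->
  (forall t, (0 <= t <= 1)%R -> (Cmod (g (p + RtoC t * (q - p))%C) <= M)%R) ->
  (Cmod (SI g p q) <= 2 * Cmod (q - p) * M)%R.
Proof.
  intros Hg HM. unfold SI. rewrite Cmod_mult.
  assert (E := CI_bound (fun t => g (p + RtoC t * (q - p))) 0 1 M ltac:(lra) (CIok_line g p (q - p) 0 1 Hg) HM).
  pose proof (Cmod_ge_0 (q - p)). nra.
Qed.

Lemma seg_point_dist (p q z : C) t : (0 <= t <= 1)%R ->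
  (Cmod (p + RtoC t * (q - p) - z) <= (1 - t) * Cmod (p - z) + t * Cmod (q - z))%R.
Proof.
  intros Ht. replace (p + RtoC t * (q - p) - z) with (RtoC (1 - t) * (p - z) + RtoC t * (q - z)) by Cbrute.
  eapply Rle_trans. apply Cmod_triangle. rewrite !Cmod_mult, !Cmod_R.
  rewrite (Rabs_right (1 - t)) by lra. rewrite (Rabs_right t) by lra. lra.
Qed.

Lemma seg_point_le (p q z : C) t K : (0 <= t <= 1)%R -> (Cmod (p - z) <= K)%R -> (Cmod (q - z) <= K)%R ->
  (Cmod (p + RtoC t * (q - p) - z) <= K)%R.
Proof. intros Ht H1 H2. eapply Rle_trans. apply seg_point_dist. exact Ht. nra. Qed.

Lemma Ccont_affine (al be : C) w : Ccont (fun w => al + be * w) w.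
Proof. apply (Cdiff_Ccont _ _ (0 + (0 * w + be * 1))). apply Cdiff_plus. apply Cdiff_const.
  apply Cdiff_mult. apply Cdiff_const. apply Cdiff_id. Qed.
Open Scope C_scope.

Record tri := Tri { ta : C; tb : C; tc : C }.

Definition mid (x y : C) : C := x + RtoC (/ 2) * (y - x).

Definition It g T := I3 g (ta T) (tb T) (tc T).
Definition per T := (Cmod (ta T - tb T) + Cmod (tb T - tc T) + Cmod (tc T - ta T))%R.

Definition t1 T := Tri (ta T) (mid (ta T) (tb T)) (mid (tc T) (ta T)).
Definition t2 T := Tri (mid (ta T) (tb T)) (tb T) (mid (tb T) (tc T)).
Definition t3 T := Tri (mid (tc T) (ta T)) (mid (tb T) (tc T)) (tc T).
Definition t4 T := Tri (mid (tb T) (tc T)) (mid (tc T) (ta T)) (mid (ta T) (tb T)).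

Lemma It_sub g T : (forall w, Ccont g w) -> It g T = It g (t1 T) + It g (t2 T) + It g (t3 T) + It g (t4 T).
Proof.
  intros Hg. destruct T as [a b c]. unfold It, t1, t2, t3, t4, I3, mid. cbn [ta tb tc].
  rewrite (SI_split g a b (/2)) by exact Hg.
  rewrite (SI_split g b c (/2)) by exact Hg.
  rewrite (SI_split g c a (/2)) by exact Hg.
  rewrite (SI_rev g (c + RtoC (/ 2) * (a - c)) (a + RtoC (/ 2) * (b - a))) by exact Hg.
  rewrite (SI_rev g (a + RtoC (/ 2) * (b - a)) (b + RtoC (/ 2) * (c - b))) by exact Hg.
  rewrite (SI_rev g (b + RtoC (/ 2) * (c - b)) (c + RtoC (/ 2) * (a - c))) by exact Hg.
  ring.
Qed.

Definition pick g T : tri :=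
  if Rle_dec (Cmod (It g T) / 4) (Cmod (It g (t1 T))) then t1 T else
  if Rle_dec (Cmod (It g T) / 4) (Cmod (It g (t2 T))) then t2 T else
  if Rle_dec (Cmod (It g T) / 4) (Cmod (It g (t3 T))) then t3 T else t4 T.

Lemma pick_spec g T : (forall w, Ccont g w) -> (Cmod (It g T) / 4 <= Cmod (It g (pick g T)))%R.
Proof.
  intros Hg. unfold pick.
  destruct (Rle_dec _ _); [assumption|]. destruct (Rle_dec _ _); [assumption|].
  destruct (Rle_dec _ _); [assumption|].
  destruct (Rle_dec (Cmod (It g T) / 4) (Cmod (It g (t4 T)))) as [H|H]; [assumption|].
  exfalso. rewrite (It_sub g T Hg) in *.
  set (x1 := It g (t1 T)) in *. set (x2 := It g (t2 T)) in *. set (x3 := It g (t3 T)) in *.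
  set (x4 := It g (t4 T)) in *.
  pose proof (Cmod_triangle (x1 + x2 + x3) x4). pose proof (Cmod_triangle (x1 + x2) x3).
  pose proof (Cmod_triangle x1 x2). lra.
Qed.

Lemma half_mod (x y u v : C) : x - y = RtoC (/ 2) * (u - v) -> Cmod (x - y) = (/ 2 * Cmod (u - v))%R.
Proof. intros E. rewrite E, Cmod_mult, Cmod_R, Rabs_right. reflexivity. lra. Qed.

Lemma per_sub T : per (t1 T) = (per T / 2)%R /\ per (t2 T) = (per T / 2)%R /\
  per (t3 T) = (per T / 2)%R /\ per (t4 T) = (per T / 2)%R.
Proof.
  destruct T as [a b c]. unfold per, t1, t2, t3, t4, mid. cbn [ta tb tc].
  rewrite (half_mod a (a + RtoC (/ 2) * (b - a)) a b) by Cbrute.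
  rewrite (half_mod (a + RtoC (/ 2) * (b - a)) (c + RtoC (/ 2) * (a - c)) b c) by Cbrute.
  rewrite (half_mod (c + RtoC (/ 2) * (a - c)) a c a) by Cbrute.
  rewrite (half_mod (a + RtoC (/ 2) * (b - a)) b a b) by Cbrute.
  rewrite (half_mod b (b + RtoC (/ 2) * (c - b)) b c) by Cbrute.
  rewrite (half_mod (b + RtoC (/ 2) * (c - b)) (a + RtoC (/ 2) * (b - a)) c a) by Cbrute.
  rewrite (half_mod (c + RtoC (/ 2) * (a - c)) (b + RtoC (/ 2) * (c - b)) a b) by Cbrute.
  rewrite (half_mod (b + RtoC (/ 2) * (c - b)) c b c) by Cbrute.
  rewrite (half_mod c (c + RtoC (/ 2) * (a - c)) c a) by Cbrute.
  rewrite (half_mod (b + RtoC (/ 2) * (c - b)) (c + RtoC (/ 2) * (a - c)) b a) by Cbrute.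
  rewrite (half_mod (c + RtoC (/ 2) * (a - c)) (a + RtoC (/ 2) * (b - a)) c b) by Cbrute.
  rewrite (half_mod (a + RtoC (/ 2) * (b - a)) (b + RtoC (/ 2) * (c - b)) a c) by Cbrute.
  rewrite (Cmod_sub_sym b a), (Cmod_sub_sym c b), (Cmod_sub_sym a c).
  repeat split; field.
Qed.

Lemma per_pick g T : per (pick g T) = (per T / 2)%R.
Proof. destruct (per_sub T) as [? [? [? ?]]]. unfold pick.
  repeat destruct (Rle_dec _ _); assumption. Qed.

Lemma per_sides T : (Cmod (tb T - ta T) <= per T)%R /\ (Cmod (tc T - ta T) <= per T)%R.
Proof. unfold per. pose proof (Cmod_ge_0 (ta T - tb T)). pose proof (Cmod_ge_0 (tb T - tc T)).
  pose proof (Cmod_ge_0 (tc T - ta T)). rewrite (Cmod_sub_sym (tb T)). lra. Qed.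

Lemma pick_ta g T : (Cmod (ta (pick g T) - ta T) <= per T)%R.
Proof.
  destruct (per_sides T) as [H1 H2]. pose proof (Cmod_ge_0 (tb T - ta T)). pose proof (Cmod_ge_0 (tc T - ta T)).
  unfold pick; repeat destruct (Rle_dec _ _); destruct T as [a b c]; unfold t1, t2, t3, t4, mid in *; simpl in *.
  - replace (a - a) with (RtoC 0) by ring. rewrite Cmod_0. lra.
  - replace (a + RtoC (/ 2) * (b - a) - a) with (RtoC (/2) * (b - a)) by ring.
    rewrite Cmod_mult, Cmod_R, Rabs_right by lra. lra.
  - replace (c + RtoC (/ 2) * (a - c) - a) with (RtoC (/2) * (c - a)) by Cbrute.
    rewrite Cmod_mult, Cmod_R, Rabs_right by lra. lra.
  - replace (b + RtoC (/ 2) * (c - b) - a) with (RtoC (/2) * (b - a) + RtoC (/2) * (c - a)) by Cbrute.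
    eapply Rle_trans. apply Cmod_triangle. rewrite !Cmod_mult, !Cmod_R, !Rabs_right by lra. lra.
Qed.

Lemma pick_P g T (P : C -> Prop) : (forall x y, P x -> P y -> P (mid x y)) ->
  P (ta T) -> P (tb T) -> P (tc T) ->
  P (ta (pick g T)) /\ P (tb (pick g T)) /\ P (tc (pick g T)).
Proof.
  intros HP Ha Hb Hc. unfold pick; repeat destruct (Rle_dec _ _); unfold t1, t2, t3, t4; simpl;
  repeat split; auto.
Qed.

Lemma hpow_pos n : (0 < (/ 2) ^ n)%R.
Proof. apply pow_lt. lra. Qed.

Lemma hpow_small K eps : (0 < eps)%R -> exists N, (K * (/ 2) ^ N < eps)%R.
Proof.
  intros Heps. destruct (Pow_x_infinity 2 ltac:(rewrite Rabs_right; lra) (Rabs K / eps + 1)) as [N HN].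
  exists N. specialize (HN N (le_n N)). rewrite Rabs_right in HN by (apply Rle_ge, pow_le; lra).
  rewrite pow_inv. assert (0 < 2 ^ N)%R by (apply pow_lt; lra).
  apply Rle_lt_trans with (Rabs K * / 2 ^ N)%R.
  apply Rmult_le_compat_r. left; apply Rinv_0_lt_compat; lra. apply Rle_abs.
  apply (Rmult_lt_reg_r (2 ^ N)). lra. rewrite Rmult_assoc, Rinv_l by lra. rewrite Rmult_1_r.
  assert (Rabs K / eps < 2 ^ N)%R by lra.
  apply (Rmult_lt_compat_r eps) in H0; [|lra]. unfold Rdiv in H0. rewrite Rmult_assoc, Rinv_l in H0 by lra. lra.
Qed.

Lemma le_eps (x y : R) : (forall eps, (0 < eps)%R -> (x <= y + eps)%R) -> (x <= y)%R.
Proof. intros H. destruct (Rle_dec x y) as [|Hn]; [assumption|].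
  specialize (H ((x - y) / 2)%R ltac:(lra)). lra. Qed.

Section Goursat.
Variable g : C -> C.
Hypothesis Hg : forall w, Ccont g w.
Variable P : C -> Prop.
Hypothesis HPmid : forall x y, P x -> P y -> P (mid x y).
Hypothesis HPcl : forall p, (forall eps, (0 < eps)%R -> exists w, P w /\ (Cmod (w - p) < eps)%R) -> P p.
Hypothesis HPd : forall w, P w -> exists l, Cdiff g w l.
Variable T0 : tri.
Hypothesis HP0 : P (ta T0) /\ P (tb T0) /\ P (tc T0).

Definition Tn (n : nat) : tri := Nat.iter n (pick g) T0.

Lemma Tn_S n : Tn (S n) = pick g (Tn n).
Proof. reflexivity. Qed.

Lemma Tn_per n : per (Tn n) = (per T0 * (/ 2) ^ n)%R.
Proof. induction n. simpl. ring. rewrite Tn_S, per_pick, IHn. simpl. field. Qed.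

Lemma Tn_It n : (Cmod (It g T0) * ((/ 2) ^ n * (/ 2) ^ n) <= Cmod (It g (Tn n)))%R.
Proof. induction n. simpl. lra. rewrite Tn_S. eapply Rle_trans; [|apply pick_spec; exact Hg].
  simpl. lra. Qed.

Lemma Tn_P n : P (ta (Tn n)) /\ P (tb (Tn n)) /\ P (tc (Tn n)).
Proof. induction n. exact HP0. rewrite Tn_S. destruct IHn as [? [? ?]]. apply pick_P; auto. Qed.

Lemma per_ge0 T : (0 <= per T)%R.
Proof. unfold per. pose proof (Cmod_ge_0 (ta T - tb T)). pose proof (Cmod_ge_0 (tb T - tc T)).
  pose proof (Cmod_ge_0 (tc T - ta T)). lra. Qed.

Lemma Tn_ta_k n k : (Cmod (ta (Tn (n + k)) - ta (Tn n)) <= 2 * per T0 * (/ 2) ^ n - 2 * per T0 * (/ 2) ^ (n + k))%R.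
Proof.
  induction k. rewrite Nat.add_0_r. replace (ta (Tn n) - ta (Tn n)) with (RtoC 0) by ring. rewrite Cmod_0. lra.
  rewrite Nat.add_succ_r, Tn_S.
  replace (ta (pick g (Tn (n + k))) - ta (Tn n)) with ((ta (pick g (Tn (n + k))) - ta (Tn (n + k))) + (ta (Tn (n + k)) - ta (Tn n))) by ring.
  eapply Rle_trans. apply Cmod_triangle. pose proof (pick_ta g (Tn (n + k))). rewrite Tn_per in H.
  simpl. lra.
Qed.

Lemma Tn_ta n m : (n <= m)%nat -> (Cmod (ta (Tn m) - ta (Tn n)) <= 2 * per T0 * (/ 2) ^ n)%R.
Proof. intros H. replace m with (n + (m - n))%nat by lia. eapply Rle_trans. apply Tn_ta_k.
  pose proof (hpow_pos (n + (m - n))). pose proof (per_ge0 T0). nra. Qed.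

End Goursat.

Lemma hpow_mono N n : (N <= n)%nat -> ((/ 2) ^ n <= (/ 2) ^ N)%R.
Proof.
  intros H. replace n with (N + (n - N))%nat by lia. rewrite pow_add.
  assert (forall k, ((/ 2) ^ k <= 1)%R). { induction k. simpl; lra. simpl. lra. }
  pose proof (hpow_pos N). specialize (H0 (n - N)%nat). nra.
Qed.

Lemma lim_bound (u : nat -> R) l n c : Un_cv u l -> (forall m, (n <= m)%nat -> (Rabs (u m - u n) <= c)%R) ->
  (Rabs (u n - l) <= c)%R.
Proof.
  intros Hu Hc. apply le_eps. intros eps Heps. destruct (Hu eps Heps) as [N HN].
  specialize (HN (Nat.max n N) ltac:(lia)). specialize (Hc (Nat.max n N) ltac:(lia)).
  unfold Rdist in HN.
  replace (u n - l)%R with (- (u (Nat.max n N) - u n) + (u (Nat.max n N) - l))%R by ring.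
  eapply Rle_trans. apply Rabs_triang. rewrite Rabs_Ropp. lra.
Qed.

Lemma conv_seq (x : nat -> C) K : (0 <= K)%R ->
  (forall n m, (n <= m)%nat -> (Cmod (x m - x n) <= K * (/ 2) ^ n)%R) ->
  exists p, forall n, (Cmod (x n - p) <= 2 * K * (/ 2) ^ n)%R.
Proof.
  intros HK Hx.
  assert (Hre : forall n m, (n <= m)%nat -> (Rabs (fst (x m) - fst (x n)) <= K * (/ 2) ^ n)%R).
  { intros n m H. eapply Rle_trans; [|apply (Hx n m H)].
    pose proof (abs_re_le (x m - x n)). destruct (x m), (x n). simpl in *. exact H0. }
  assert (Him : forall n m, (n <= m)%nat -> (Rabs (snd (x m) - snd (x n)) <= K * (/ 2) ^ n)%R).
  { intros n m H. eapply Rle_trans; [|apply (Hx n m H)].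
    pose proof (abs_im_le (x m - x n)). destruct (x m), (x n). simpl in *. exact H0. }
  assert (Cc : forall u : nat -> R, (forall n m, (n <= m)%nat -> (Rabs (u m - u n) <= K * (/ 2) ^ n)%R) -> Cauchy_crit u).
  { intros u Hu eps Heps. destruct (hpow_small K eps Heps) as [N HN]. exists N. intros n m Hn Hm.
    unfold Rdist. destruct (Nat.le_ge_cases n m) as [Hnm|Hnm].
    - rewrite Rabs_minus_sym. eapply Rle_lt_trans. apply Hu, Hnm. eapply Rle_lt_trans; [|exact HN].
      apply Rmult_le_compat_l. exact HK. apply hpow_mono. exact Hn.
    - eapply Rle_lt_trans. apply Hu, Hnm. eapply Rle_lt_trans; [|exact HN].
      apply Rmult_le_compat_l. exact HK. apply hpow_mono. exact Hm. }
  destruct (Rcomplete.R_complete _ (Cc _ Hre)) as [l1 H1]. destruct (Rcomplete.R_complete _ (Cc _ Him)) as [l2 H2].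
  exists (l1, l2). intros n. eapply Rle_trans. apply Cmod_le_reim.
  pose proof (lim_bound _ l1 n _ H1 (Hre n)). pose proof (lim_bound _ l2 n _ H2 (Him n)).
  cbv beta in *. destruct (x n). simpl in *. unfold Rminus in *. lra.
Qed.

Lemma Ccont_minus f g z : Ccont f z -> Ccont g z -> Ccont (fun w => f w - g w) z.
Proof.
  intros H1 H2 eps Heps. destruct (H1 (eps/2)%R ltac:(lra)) as [d1 [Hd1 H1']].
  destruct (H2 (eps/2)%R ltac:(lra)) as [d2 [Hd2 H2']].
  exists (Rmin d1 d2). split. apply Rmin_pos; lra. intros s Hs.
  specialize (H1' s ltac:(eapply Rlt_le_trans; [exact Hs|apply Rmin_l])).
  specialize (H2' s ltac:(eapply Rlt_le_trans; [exact Hs|apply Rmin_r])).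
  replace (f s - g s - (f z - g z)) with ((f s - f z) - (g s - g z)) by ring.
  eapply Rle_lt_trans. apply Cmod_minus_le. lra.
Qed.

Section Goursat2.
Variable g : C -> C.
Hypothesis Hg : forall w, Ccont g w.
Variable P : C -> Prop.
Hypothesis HPmid : forall x y, P x -> P y -> P (mid x y).
Hypothesis HPcl : forall p, (forall eps, (0 < eps)%R -> exists w, P w /\ (Cmod (w - p) < eps)%R) -> P p.
Hypothesis HPd : forall w, P w -> exists l, Cdiff g w l.
Variable T0 : tri.
Hypothesis HP0 : P (ta T0) /\ P (tb T0) /\ P (tc T0).

Lemma goursat : It g T0 = 0.
Proof.
  set (Tn := Tn g T0).
  set (per0 := per T0).
  assert (Hper0 : (0 <= per0)%R) by apply per_ge0.
  destruct (conv_seq (fun n => ta (Tn n)) (2 * per0)) as [p Hp]. lra.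
  { intros n m H. apply Tn_ta. exact H. }
  assert (HPp : P p).
  { apply HPcl. intros eps Heps. destruct (hpow_small (2 * (2 * per0)) eps Heps) as [N HN].
    exists (ta (Tn N)). split. apply Tn_P; assumption. eapply Rle_lt_trans; [apply Hp|exact HN]. }
  destruct (HPd p HPp) as [l Hl].
  apply Cmod_eq_0. apply Rle_antisym; [|apply Cmod_ge_0].
  apply le_eps. intros eps Heps. rewrite Rplus_0_l.
  set (e := (eps / (10 * (per0 * per0) + 1))%R).
  assert (He : (0 < e)%R) by (unfold e; apply Rdiv_lt_0_compat; nra).
  destruct (Hl e He) as [d [Hd Hl']].
  destruct (hpow_small (5 * per0) d Hd) as [N HN].
  set (h := ((/ 2) ^ N)%R). assert (Hh : (0 < h)%R) by apply hpow_pos.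
  set (A := fun w => (g p - l * p) + l * w).
  assert (HA : forall w, Ccont A w) by (intros; apply Ccont_affine).
  set (TN := Tn N).
  assert (Eper : per TN = (per0 * h)%R) by apply Tn_per.
  assert (Hta : (Cmod (ta TN - p) <= 4 * per0 * h)%R) by (pose proof (Hp N) as HH; cbv beta in HH; unfold h, TN; lra).
  assert (Hsides := per_sides TN).
  assert (Hpt : forall x y, (Cmod (x - ta TN) <= per TN)%R -> (Cmod (y - ta TN) <= per TN)%R ->
    forall t, (0 <= t <= 1)%R -> (Cmod (g (x + RtoC t * (y - x))%C - A (x + RtoC t * (y - x))%C) <= e * (5 * per0 * h))%R).
  { intros x y Hx Hy t Ht. set (w := x + RtoC t * (y - x)).
    assert (Hw1 : (Cmod (w - ta TN) <= per TN)%R) by (apply seg_point_le; auto).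
    assert (Hw : (Cmod (w - p) <= 5 * per0 * h)%R).
    { replace (w - p) with ((w - ta TN) + (ta TN - p)) by ring. eapply Rle_trans. apply Cmod_triangle. lra. }
    assert (Hw' : (Cmod (w - p) < d)%R) by (unfold h in *; lra).
    specialize (Hl' w Hw'). unfold A. replace (g w - (g p - l * p + l * w)) with (g w - g p - l * (w - p)) by ring.
    eapply Rle_trans. exact Hl'. apply Rmult_le_compat_l; lra. }
  assert (Hv0 : (Cmod (ta TN - ta TN) <= per TN)%R).
  { replace (ta TN - ta TN) with (RtoC 0) by ring. rewrite Cmod_0. apply per_ge0. }
  assert (HIt : It g TN = I3 (fun w => g w - A w) (ta TN) (tb TN) (tc TN)).
  { rewrite I3_minus by auto. unfold A. rewrite I3_affine. unfold It. ring. }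
  assert (HgA : forall w, Ccont (fun w => g w - A w) w) by (intros; apply Ccont_minus; auto).
  set (M := (e * (5 * per0 * h))%R).
  destruct Hsides as [Hs1 Hs2].
  assert (B1 := SI_bound (fun w => g w - A w) (ta TN) (tb TN) M HgA (Hpt _ _ Hv0 Hs1)).
  assert (B2 := SI_bound (fun w => g w - A w) (tb TN) (tc TN) M HgA (Hpt _ _ Hs1 Hs2)).
  assert (B3 := SI_bound (fun w => g w - A w) (tc TN) (ta TN) M HgA (Hpt _ _ Hs2 Hv0)).
  assert (HI : (Cmod (It g TN) <= 2 * M * per TN)%R).
  { rewrite HIt. unfold I3. eapply Rle_trans. apply Cmod_triang3. unfold per.
    rewrite (Cmod_sub_sym (ta TN) (tb TN)), (Cmod_sub_sym (tb TN) (tc TN)), (Cmod_sub_sym (tc TN) (ta TN)). lra. }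
  assert (HT := Tn_It g Hg T0 N). fold Tn in HT. fold TN in HT. fold h in HT.
  rewrite Eper in HI. unfold M in HI.
  assert (Cmod (It g T0) * (h * h) <= (10 * e * (per0 * per0)) * (h * h))%R by lra.
  apply Rmult_le_reg_r in H; [|nra].
  assert (e * (10 * (per0 * per0) + 1) = eps)%R by (unfold e; field; nra).
  nra.
Qed.
End Goursat2.
Open Scope C_scope.

Definition cross (x y : C) : R := (fst x * snd y - snd x * fst y)%R.

Lemma cross_bound x y : (Rabs (cross x y) <= 2 * Cmod x * Cmod y)%R.
Proof.
  unfold cross. eapply Rle_trans. apply Rabs_triang. rewrite Rabs_Ropp, !Rabs_mult.
  pose proof (abs_re_le x). pose proof (abs_im_le x). pose proof (abs_re_le y). pose proof (abs_im_le y).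
  pose proof (Rabs_pos (fst x)). pose proof (Rabs_pos (snd x)). pose proof (Rabs_pos (fst y)). pose proof (Rabs_pos (snd y)).
  assert (Rabs (fst x) * Rabs (snd y) <= Cmod x * Cmod y)%R by (apply Rmult_le_compat; lra).
  assert (Rabs (snd x) * Rabs (fst y) <= Cmod x * Cmod y)%R by (apply Rmult_le_compat; lra).
  lra.
Qed.

Lemma I3_eq_line g a b c p u x y w : (forall w, Ccont g w) ->
  a = p + RtoC x * u -> b = p + RtoC y * u -> c = p + RtoC w * u -> I3 g a b c = 0.
Proof. intros Hg -> -> ->. apply I3_line. exact Hg. Qed.

Lemma SI_const (k p q : C) : SI (fun _ => k) p q = k * (q - p).
Proof. unfold SI. rewrite CI_const. replace (1 - 0)%R with 1%R by ring. ring. Qed.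

Lemma Ccont_affine_const (k w : C) : Ccont (fun _ => k) w.
Proof. intros eps Heps. exists 1%R. split. lra. intros. replace (k - k) with (RtoC 0) by ring. rewrite Cmod_0. exact Heps. Qed.

Section Vertex.
Variable g : C -> C.
Hypothesis Hg : forall w, Ccont g w.
Variable z : C.
Hypothesis Hd : forall w, w <> z -> exists l, Cdiff g w l.

Lemma vertex_collinear b c : cross (b - z) (c - z) = 0%R -> I3 g z b c = 0.
Proof.
  intros HD. destruct (Ceq_dec b z) as [Eb|Eb].
  - subst b. apply (I3_eq_line g z z c z (c - z) 0 0 1 Hg); Cbrute.
  - set (u := b - z). set (v := c - z). fold u v in HD.
    assert (Hu : (fst u * fst u + snd u * snd u <> 0)%R).
    { intro E. apply Eb. pose proof (Rle_0_sqr (fst u)). pose proof (Rle_0_sqr (snd u)). unfold Rsqr in *.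
      assert (fst u * fst u = 0)%R by lra. assert (snd u * snd u = 0)%R by lra.
      apply Rmult_integral in H1. apply Rmult_integral in H2.
      assert (fst u = 0%R) by tauto. assert (snd u = 0%R) by tauto. clear H1 H2.
      assert (u = RtoC 0) by (destruct u; simpl in *; subst; reflexivity).
      unfold u in H1. apply (f_equal (fun x => x + z)) in H1. rewrite Cplus_0_l in H1.
      rewrite <- H1. ring. }
    set (mu := ((fst u * fst v + snd u * snd v) / (fst u * fst u + snd u * snd u))%R).
    apply (I3_eq_line g z b c z u 0 1 mu Hg). Cbrute. unfold u. Cbrute.
    assert (v = RtoC mu * u).
    { unfold cross in HD. unfold mu. destruct u as [u1 u2], v as [v1 v2]. simpl in *.
      apply injective_projections; simpl.
      - assert (E : ((u1 * v1 + u2 * v2) * u1 - v1 * (u1 * u1 + u2 * u2) = u2 * (u1 * v2 - u2 * v1))%R) by ring.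
        rewrite HD, Rmult_0_r in E.
        apply (Rmult_eq_reg_r (u1 * u1 + u2 * u2)); [|exact Hu].
        replace ((u1 * v1 + u2 * v2) / (u1 * u1 + u2 * u2) * u1 - 0 * u2)%R with ((u1 * v1 + u2 * v2) * u1 / (u1 * u1 + u2 * u2))%R by (field; exact Hu).
        unfold Rdiv. rewrite Rmult_assoc, Rinv_l by exact Hu. lra.
      - assert (E : ((u1 * v1 + u2 * v2) * u2 - v2 * (u1 * u1 + u2 * u2) = - u1 * (u1 * v2 - u2 * v1))%R) by ring.
        rewrite HD, Rmult_0_r in E.
        apply (Rmult_eq_reg_r (u1 * u1 + u2 * u2)); [|exact Hu].
        replace ((u1 * v1 + u2 * v2) / (u1 * u1 + u2 * u2) * u2 + 0 * u1)%R with ((u1 * v1 + u2 * v2) * u2 / (u1 * u1 + u2 * u2))%R by (field; exact Hu).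
        unfold Rdiv. rewrite Rmult_assoc, Rinv_l by exact Hu. lra. }
    unfold v in H. rewrite <- H. ring.
Qed.


Lemma cross_lin (x y w : C) : (cross (x - y) w = cross x w - cross y w)%R.
Proof. unfold cross. simpl. ring. Qed.

Lemma vertex_noncol b c : cross (b - z) (c - z) <> 0%R -> I3 g z b c = 0.
Proof.
  intros HD. set (u := b - z) in *. set (v := c - z) in *. set (D := cross u v) in *.
  set (L := fun w => (cross (w - z) (v - u) / D)%R).
  assert (Hdec : forall lam, (0 < lam <= 1)%R ->
    I3 g z b c = I3 g z (z + RtoC lam * (b - z)) (c + RtoC (1 - lam) * (z - c))).
  { intros lam Hlam.
    set (b' := z + RtoC lam * (b - z)). set (c' := c + RtoC (1 - lam) * (z - c)).
    set (P := fun w => (lam <= L w)%R).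
    assert (HPmid : forall x y, P x -> P y -> P (mid x y)).
    { intros x y Hx Hy. unfold P, L, mid in *.
      replace (cross (x + RtoC (/ 2) * (y - x) - z) (v - u) / D)%R with
        ((cross (x - z) (v - u) / D + cross (y - z) (v - u) / D) / 2)%R. lra.
      unfold cross. simpl. field. exact HD. }
    assert (Hnv : (0 < 2 * Cmod (v - u) + 1)%R) by (pose proof (Cmod_ge_0 (v - u)); lra).
    assert (HPcl : forall p, (forall eps, (0 < eps)%R -> exists w, P w /\ (Cmod (w - p) < eps)%R) -> P p).
    { intros p Hp. unfold P. destruct (Rle_dec lam (L p)) as [|Hn]; [assumption|]. exfalso.
      assert (HDa : (0 < Rabs D)%R) by (apply Rabs_pos_lt; exact HD).
      destruct (Hp ((lam - L p) * Rabs D / (2 * Cmod (v - u) + 1))%R) as [w [Hw1 Hw2]].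
      { apply Rdiv_lt_0_compat; [|lra]. apply Rmult_lt_0_compat; lra. }
      unfold P in Hw1.
      assert (E : (L w - L p = cross (w - p) (v - u) / D)%R).
      { unfold L. cbv beta. replace (w - p) with ((w - z) - (p - z)) by ring. rewrite (cross_lin (w - z) (p - z)). field. exact HD. }
      assert (B : (Rabs (L w - L p) * Rabs D <= 2 * Cmod (w - p) * Cmod (v - u))%R).
      { rewrite E. unfold Rdiv. rewrite Rabs_mult, Rabs_inv, Rmult_assoc, Rinv_l by lra.
        rewrite Rmult_1_r. apply cross_bound. }
      assert (B2 : (2 * Cmod (w - p) * Cmod (v - u) <= Cmod (w - p) * (2 * Cmod (v - u) + 1))%R).
      { pose proof (Cmod_ge_0 (w - p)). nra. }
      assert (B3 : (Cmod (w - p) * (2 * Cmod (v - u) + 1) < (lam - L p) * Rabs D)%R).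
      { apply (Rmult_lt_compat_r (2 * Cmod (v - u) + 1)) in Hw2; [|lra].
        unfold Rdiv in Hw2. rewrite Rmult_assoc, Rinv_l, Rmult_1_r in Hw2 by lra. exact Hw2. }
      assert (Rabs (L w - L p) < lam - L p)%R.
      { apply (Rmult_lt_reg_r (Rabs D)). exact HDa. lra. }
      pose proof (Rle_abs (L w - L p)). lra. }
    assert (HPd : forall w, P w -> exists l, Cdiff g w l).
    { intros w Hw. apply Hd. intro E. subst w. unfold P in Hw.
      assert (L z = 0%R). { unfold L. replace (z - z) with (RtoC 0) by ring. unfold cross. simpl. field. exact HD. }
      lra. }
    assert (Lb' : L b' = lam). { unfold L, b', D, u, v, cross. simpl. field. exact HD. }
    assert (Lb : L b = 1%R). { unfold L, D, u, v, cross. simpl. field. exact HD. }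
    assert (Lc : L c = 1%R). { unfold L, D, u, v, cross. simpl. field. exact HD. }
    assert (Lc' : L c' = lam). { unfold L, c', D, u, v, cross. simpl. field. exact HD. }
    assert (G1 := goursat g Hg P HPmid HPcl HPd (Tri b' b c) ltac:(unfold P; simpl; rewrite Lb', Lb, Lc; lra)).
    assert (G2 := goursat g Hg P HPmid HPcl HPd (Tri b' c c') ltac:(unfold P; simpl; rewrite Lb', Lc, Lc'; lra)).
    unfold It in G1, G2. cbn [ta tb tc] in G1, G2. unfold I3 in *.
    rewrite (SI_split g z b lam) by exact Hg. fold b'.
    rewrite (SI_split g c z (1 - lam)) by exact Hg. fold c'.
    rewrite (SI_rev g b' c) in G1 by exact Hg. rewrite (SI_rev g b' c') in G2 by exact Hg.
    transitivity (SI g z b' + SI g b' c' + SI g c' z + (SI g b' b + SI g b c + - SI g b' c) + (SI g b' c + SI g c c' + - SI g b' c')).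
    ring. rewrite G1, G2. ring. }
  apply Cmod_eq_0. apply Rle_antisym; [|apply Cmod_ge_0].
  apply le_eps. intros eps Heps. rewrite Rplus_0_l.
  destruct (Hg z 1%R Rlt_0_1) as [d [Hd0 Hdz]].
  set (K := (Cmod (g z) + 1)%R). assert (HK : (0 < K)%R) by (unfold K; pose proof (Cmod_ge_0 (g z)); lra).
  set (S := (Cmod u + Cmod (v - u) + Cmod v + 1)%R).
  assert (HS : (0 < S)%R) by (unfold S; pose proof (Cmod_ge_0 u); pose proof (Cmod_ge_0 v); pose proof (Cmod_ge_0 (v - u)); lra).
  set (lam := Rmin 1 (Rmin (d / (2 * S)) (eps / (2 * S * K)))).
  assert (Hl1 : (lam <= 1)%R) by apply Rmin_l.
  assert (Hl2 : (lam <= d / (2 * S))%R) by (eapply Rle_trans; [apply Rmin_r|apply Rmin_l]).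
  assert (Hl3 : (lam <= eps / (2 * S * K))%R) by (eapply Rle_trans; [apply Rmin_r|apply Rmin_r]).
  assert (Hl0 : (0 < lam)%R).
  { unfold lam. apply Rmin_pos. lra. apply Rmin_pos; apply Rdiv_lt_0_compat; try lra.
    apply Rmult_lt_0_compat; lra. }
  rewrite (Hdec lam) by lra.
  set (b' := z + RtoC lam * (b - z)). set (c' := c + RtoC (1 - lam) * (z - c)).
  assert (E1 : b' - z = RtoC lam * u) by (unfold b', u; Cbrute).
  assert (E2 : c' - z = RtoC lam * v) by (unfold c', v; Cbrute).
  assert (E3 : c' - b' = RtoC lam * (v - u)) by (unfold c', b', u, v; Cbrute).
  assert (HR : (lam * S <= d / 2)%R).
  { apply (Rmult_le_compat_r S) in Hl2; [|lra]. unfold Rdiv in Hl2.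
    replace (d * / (2 * S) * S)%R with (d / 2)%R in Hl2 by (field; lra). exact Hl2. }
  assert (Hu0 := Cmod_ge_0 u). assert (Hv0 := Cmod_ge_0 v). assert (Hvu0 := Cmod_ge_0 (v - u)).
  assert (Hedge : forall p q, (Cmod (p - z) <= lam * S)%R -> (Cmod (q - z) <= lam * S)%R ->
    (Cmod (SI g p q) <= 2 * Cmod (q - p) * K)%R).
  { intros p q Hp Hq. apply SI_bound. exact Hg. intros t Ht.
    assert (Hw := seg_point_le p q z t (lam * S) Ht Hp Hq).
    assert (Hw' : (Cmod (p + RtoC t * (q - p) - z) < d)%R) by lra.
    specialize (Hdz _ Hw'). unfold K.
    replace (g (p + RtoC t * (q - p))) with ((g (p + RtoC t * (q - p)) - g z) + g z) by ring.
    eapply Rle_trans. apply Cmod_triangle. lra. }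
  assert (Vz : (Cmod (z - z) <= lam * S)%R).
  { replace (z - z) with (RtoC 0) by ring. rewrite Cmod_0. apply Rmult_le_pos; lra. }
  assert (Vb : (Cmod (b' - z) <= lam * S)%R).
  { rewrite E1, Cmod_mult, Cmod_R, Rabs_right by lra. apply Rmult_le_compat_l. lra. unfold S. lra. }
  assert (Vc : (Cmod (c' - z) <= lam * S)%R).
  { rewrite E2, Cmod_mult, Cmod_R, Rabs_right by lra. apply Rmult_le_compat_l. lra. unfold S. lra. }
  assert (S1 := Hedge z b' Vz Vb). assert (S2 := Hedge b' c' Vb Vc). assert (S3 := Hedge c' z Vc Vz).
  rewrite E1 in S1. rewrite E3 in S2. rewrite Cmod_sub_sym, E2 in S3.
  rewrite !Cmod_mult, !Cmod_R, !Rabs_right in S1, S2, S3 by lra.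
  unfold I3. eapply Rle_trans. apply Cmod_triang3.
  assert (lam * S * K <= eps / 2)%R.
  { apply (Rmult_le_compat_r (S * K)) in Hl3; [|apply Rmult_le_pos; lra].
    replace (eps / (2 * S * K) * (S * K))%R with (eps / 2)%R in Hl3 by (field; lra). lra. }
  assert (2 * (lam * Cmod u) * K + 2 * (lam * Cmod (v - u)) * K + 2 * (lam * Cmod v) * K <= 2 * (lam * S * K))%R.
  { unfold S. assert (0 <= lam * K)%R by (apply Rmult_le_pos; lra). nra. }
  lra.
Qed.

Lemma vertex b c : I3 g z b c = 0.
Proof.
  destruct (Req_dec (cross (b - z) (c - z)) 0) as [H|H].
  apply vertex_collinear; exact H. apply vertex_noncol; exact H.
Qed.

Definition Gp (w : C) : C := SI g z w.

Lemma Gp_diff w : Cdiff Gp w (g w).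
Proof.
  intros eps Heps. destruct (Hg w (eps / 4)%R ltac:(lra)) as [d [Hd0 Hd']].
  exists d. split. exact Hd0. intros w' Hw'.
  assert (E : Gp w' - Gp w = SI g w w').
  { unfold Gp. pose proof (vertex w w') as V. unfold I3 in V.
    rewrite (SI_rev g z w') in V by exact Hg.
    transitivity (SI g z w' - SI g z w). ring.
    transitivity (SI g z w' - SI g z w + (SI g z w + SI g w w' + - SI g z w')). rewrite V. ring. ring. }
  rewrite E. rewrite <- SI_const.
  rewrite <- SI_minus by (auto; intros; apply Ccont_affine_const).
  eapply Rle_trans. apply (SI_bound _ _ _ (eps / 4)%R).
  intros; apply Ccont_minus; [apply Hg|apply Ccont_affine_const].
  intros t Ht. left. apply Hd'. 
  assert (Hw := seg_point_le w w' w t (Cmod (w' - w)) Ht ltac:(replace (w - w) with (RtoC 0) by ring; rewrite Cmod_0; apply Cmod_ge_0) ltac:(lra)).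
  lra.
  pose proof (Cmod_ge_0 (w' - w)). nra.
Qed.

Lemma circle_zero : CI (fun t => g (gam t) * (Ci * gam t)) 0 (2 * PI) = 0.
Proof.
  transitivity (CI (fun t => (Ci * gam t) * g (gam t)) 0 (2 * PI)).
  apply CI_ext. intros; ring.
  rewrite (CI_FTC (fun t => Gp (gam t))).
  rewrite gam_2PI. ring.
  intros t _. apply RDiff_comp. apply Gp_diff. apply RDiff_gam.
  intros t _. apply RCc_mult. apply RCc_mult. apply RCc_const. apply RCc_gam.
  apply RCc_comp. apply Hg. apply RCc_gam.
Qed.

End Vertex.
Open Scope C_scope.

Lemma RCc_bounded phi a b : (a <= b)%R -> (forall t, RCc phi t) ->
  exists M, (0 <= M)%R /\ forall t, (a <= t <= b)%R -> (Cmod (phi t) <= M)%R.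
Proof.
  intros Hab H.
  destruct (continuity_ab_maj (fun t => Cmod (phi t)) a b Hab) as [x [Hx _]].
  { intros c _. intros eps Heps. destruct (H c eps Heps) as [d [Hd H']]. exists d. split. exact Hd.
    intros s [_ Hs]. unfold R_dist in *. simpl in *. specialize (H' s Hs).
    pose proof (Cmod_rev_triang (phi s) (phi c)). pose proof (Cmod_rev_triang (phi c) (phi s)).
    rewrite Cmod_sub_sym in H1. apply Rabs_lt_between'. split; lra. }
  exists (Cmod (phi x)). split. apply Cmod_ge_0. exact Hx.
Qed.

Lemma Cdiff_CI (F : C -> R -> C) (F' : R -> C) z0 r B : (0 < r)%R -> (0 <= B)%R ->
  (forall z, (Cmod (z - z0) < r)%R -> CIok (F z) 0 (2 * PI)) -> CIok F' 0 (2 * PI) ->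
  (forall z, (Cmod (z - z0) < r)%R -> forall t, (0 <= t <= 2 * PI)%R ->
     (Cmod (F z t - F z0 t - (z - z0) * F' t) <= Cmod (z - z0) * Cmod (z - z0) * B)%R) ->
  Cdiff (fun z => CI (F z) 0 (2 * PI)) z0 (CI F' 0 (2 * PI)).
Proof.
  intros Hr HB Hok Hok' Hb eps Heps.
  assert (HPI := PI_RGT_0).
  set (C0 := (2 * (2 * PI) * B + 1)%R). assert (HC0 : (0 < C0)%R) by (unfold C0; nra).
  exists (Rmin r (eps / C0)). split. apply Rmin_pos; [lra|apply Rdiv_lt_0_compat; lra].
  intros z Hz. assert (Hz1 : (Cmod (z - z0) < r)%R) by (eapply Rlt_le_trans; [exact Hz|apply Rmin_l]).
  assert (Hz2 : (Cmod (z - z0) < eps / C0)%R) by (eapply Rlt_le_trans; [exact Hz|apply Rmin_r]).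
  assert (Hr0 : (Cmod (z0 - z0) < r)%R) by (replace (z0 - z0) with (RtoC 0) by ring; rewrite Cmod_0; lra).
  rewrite (Cmult_comm (CI F' 0 (2 * PI))). rewrite <- CI_scal by exact Hok'. rewrite <- CI_minus by (auto; apply CIok_scal; exact Hok').
  rewrite <- CI_minus. 2:{ apply CIok_minus; auto. } 2:{ apply CIok_scal; exact Hok'. }
  eapply Rle_trans. apply (CI_bound _ 0 (2 * PI) (Cmod (z - z0) * Cmod (z - z0) * B)%R). lra.
  apply CIok_minus. apply CIok_minus; auto. apply CIok_scal; exact Hok'.
  intros t Ht. apply Hb; assumption.
  pose proof (Cmod_ge_0 (z - z0)).
  assert (Cmod (z - z0) * C0 <= eps)%R.
  { apply (Rmult_lt_compat_r C0) in Hz2; [|lra]. unfold Rdiv in Hz2. rewrite Rmult_assoc, Rinv_l in Hz2 by lra. lra. }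
  unfold C0 in H0. nra.
Qed.

Definition Ph1 (phi : R -> C) (z : C) : C := CI (fun t => phi t / (gam t - z)) 0 (2 * PI).
Definition Ph2 (phi : R -> C) (z : C) : C := CI (fun t => phi t / ((gam t - z) * (gam t - z))) 0 (2 * PI).
Definition Ph3 (phi : R -> C) (z : C) : C := CI (fun t => phi t / ((gam t - z) * (gam t - z) * (gam t - z))) 0 (2 * PI).

Lemma gam_sub_lb z t : (Cmod (gam t - z) >= 1 - Cmod z)%R.
Proof. pose proof (Cmod_rev_triang (gam t) z). rewrite Cmod_gam in H. lra. Qed.

Lemma gam_sub_nz z t : (Cmod z < 1)%R -> gam t - z <> 0.
Proof. intros H E. pose proof (gam_sub_lb z t). rewrite E, Cmod_0 in H0. lra. Qed.

Lemma RCc_gam_sub z t : RCc (fun s => gam s - z) t.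
Proof. apply RCc_minus. apply RCc_gam. apply RCc_const. Qed.

Section PhDiff.
Variable phi : R -> C.
Hypothesis Hphi : forall t, RCc phi t.

Lemma CIok_Ph1 z : (Cmod z < 1)%R -> CIok (fun t => phi t / (gam t - z)) 0 (2 * PI).
Proof. intros Hz. apply RCc_CIok. intros t _. unfold Cdiv. apply RCc_mult. apply Hphi.
  apply RCc_inv. apply gam_sub_nz; exact Hz. apply RCc_gam_sub. Qed.
Lemma CIok_Ph2 z : (Cmod z < 1)%R -> CIok (fun t => phi t / ((gam t - z) * (gam t - z))) 0 (2 * PI).
Proof. intros Hz. apply RCc_CIok. intros t _. unfold Cdiv. apply RCc_mult. apply Hphi.
  apply RCc_inv. apply Cmult_neq_0; apply gam_sub_nz; exact Hz.
  apply RCc_mult; apply RCc_gam_sub. Qed.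
Lemma CIok_Ph3 z : (Cmod z < 1)%R -> CIok (fun t => phi t / ((gam t - z) * (gam t - z) * (gam t - z))) 0 (2 * PI).
Proof. intros Hz. apply RCc_CIok. intros t _. unfold Cdiv. apply RCc_mult. apply Hphi.
  apply RCc_inv. repeat apply Cmult_neq_0; apply gam_sub_nz; exact Hz.
  repeat apply RCc_mult; apply RCc_gam_sub. Qed.

Lemma Ph1_diff z0 : (Cmod z0 < / 2)%R -> Cdiff (Ph1 phi) z0 (Ph2 phi z0).
Proof.
  intros Hz0. destruct (RCc_bounded phi 0 (2 * PI) ltac:(pose proof PI_RGT_0; lra) Hphi) as [M [HM0 HM]].
  apply (Cdiff_CI (fun z t => phi t / (gam t - z)) _ z0 (/ 4) (16 * M)). lra. lra.
  - intros z Hz. apply CIok_Ph1. pose proof (Cmod_rev_triang z z0). lra.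
  - apply CIok_Ph2. lra.
  - intros z Hz t Ht. assert (Hzz : (Cmod z < 3 / 4)%R) by (pose proof (Cmod_rev_triang z z0); lra).
    pose proof (gam_sub_lb z t). pose proof (gam_sub_lb z0 t).
    assert (N1 : gam t - z <> 0) by (apply gam_sub_nz; lra).
    assert (N2 : gam t - z0 <> 0) by (apply gam_sub_nz; lra).
    replace (phi t / (gam t - z) - phi t / (gam t - z0) - (z - z0) * (phi t / ((gam t - z0) * (gam t - z0))))
      with ((z - z0) * (z - z0) * (phi t / ((gam t - z) * (gam t - z0) * (gam t - z0)))) by (field; auto).
    rewrite !Cmod_mult. apply Rmult_le_compat_l. apply Rmult_le_pos; apply Cmod_ge_0.
    rewrite Cmod_div by (repeat apply Cmult_neq_0; auto). rewrite !Cmod_mult.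
    specialize (HM t Ht).
    assert (Cmod (gam t - z) * Cmod (gam t - z0) * Cmod (gam t - z0) >= / 4 * / 2 * / 2)%R.
    { apply Rle_ge. apply Rmult_le_compat; [|lra|apply Rmult_le_compat; lra|lra]. 
      apply Rmult_le_pos; lra. }
    apply (Rmult_le_reg_r (Cmod (gam t - z) * Cmod (gam t - z0) * Cmod (gam t - z0))). lra.
    unfold Rdiv. rewrite Rmult_assoc, Rinv_l by lra. nra.
Qed.

Lemma Ph2_diff z0 : (Cmod z0 < / 2)%R -> Cdiff (Ph2 phi) z0 (2 * Ph3 phi z0).
Proof.
  intros Hz0. destruct (RCc_bounded phi 0 (2 * PI) ltac:(pose proof PI_RGT_0; lra) Hphi) as [M [HM0 HM]].
  unfold Ph3. rewrite <- CI_scal by (apply CIok_Ph3; lra).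
  apply (Cdiff_CI (fun z t => phi t / ((gam t - z) * (gam t - z))) _ z0 (/ 4) (640 * M)). lra. lra.
  - intros z Hz. apply CIok_Ph2. pose proof (Cmod_rev_triang z z0). lra.
  - apply CIok_scal. apply CIok_Ph3. lra.
  - intros z Hz t Ht. assert (Hzz : (Cmod z < 3 / 4)%R) by (pose proof (Cmod_rev_triang z z0); lra).
    pose proof (gam_sub_lb z t). pose proof (gam_sub_lb z0 t).
    assert (N1 : gam t - z <> 0) by (apply gam_sub_nz; lra).
    assert (N2 : gam t - z0 <> 0) by (apply gam_sub_nz; lra).
    set (A := gam t - z0). set (d := z - z0).
    assert (EA : gam t - z = A - d) by (unfold A, d; ring). rewrite EA in N1 |- *. rewrite EA in H.
    fold A in H0, N2.
    replace (phi t / ((A - d) * (A - d)) - phi t / (A * A) - d * (2 * (phi t / (A * A * A))))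
      with (d * d * (phi t * (3 * A - 2 * d) / (A * A * A * ((A - d) * (A - d))))) by (field; auto).
    rewrite !Cmod_mult. apply Rmult_le_compat_l. apply Rmult_le_pos; apply Cmod_ge_0.
    rewrite Cmod_div by (repeat apply Cmult_neq_0; auto). rewrite !Cmod_mult.
    specialize (HM t Ht).
    assert (HA : (Cmod A <= 3 / 2)%R).
    { unfold A. eapply Rle_trans. apply Cmod_minus_le. rewrite Cmod_gam. lra. }
    assert (H3 : (Cmod (3 * A - 2 * d) <= 5)%R).
    { eapply Rle_trans. apply Cmod_minus_le. rewrite !Cmod_mult, !Cmod_R, !Rabs_right by lra.
      unfold d in *. lra. }
    assert (HA2 : (/ 2 <= Cmod A)%R) by (unfold A in *; lra).
    assert (HAd : (/ 4 <= Cmod (A - d))%R) by lra.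
    set (Q := (Cmod A * Cmod A * Cmod A * (Cmod (A - d) * Cmod (A - d)))%R).
    assert (HQ : (/ 128 <= Q)%R).
    { unfold Q. assert (/ 8 <= Cmod A * Cmod A * Cmod A)%R.
      { apply Rle_trans with (/ 2 * / 2 * / 2)%R. lra.
        apply Rmult_le_compat; [apply Rmult_le_pos; lra|lra|apply Rmult_le_compat; lra|lra]. }
      assert (/ 16 <= Cmod (A - d) * Cmod (A - d))%R.
      { apply Rle_trans with (/ 4 * / 4)%R. lra. apply Rmult_le_compat; lra. }
      apply Rle_trans with (/ 8 * / 16)%R. lra. apply Rmult_le_compat; lra. }
    apply (Rmult_le_reg_r Q). lra.
    unfold Rdiv. rewrite Rmult_assoc, Rinv_l by lra. rewrite Rmult_1_r.
    assert (Cmod (phi t) * Cmod (3 * A - 2 * d) <= M * 5)%R.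
    { apply Rmult_le_compat; try apply Cmod_ge_0; lra. }
    nra.
Qed.
End PhDiff.
Open Scope C_scope.

Lemma Cdiff_opp f z l : Cdiff f z l -> Cdiff (fun w => - f w) z (- l).
Proof. intros H eps Heps. destruct (H eps Heps) as [d [Hd H']]. exists d. split; auto.
  intros w Hw. replace (- f w - - f z - - l * (w - z)) with (- (f w - f z - l * (w - z))) by ring.
  rewrite Cmod_opp. apply H'; exact Hw. Qed.

Lemma Cdiff_shift_inv (z w0 : C) : w0 <> z -> Cdiff (fun w => - / (w - z)) w0 (/ ((w0 - z) * (w0 - z))).
Proof.
  intros H. assert (Hn : w0 - z <> 0) by (intro E; apply H; apply (f_equal (fun x => x + z)) in E; rewrite Cplus_0_l in E; rewrite <- E; ring).
  apply (Cdiff_eql _ _ (- (1 * (- / ((w0 - z) * (w0 - z)))))). field. auto.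
  apply Cdiff_opp. apply (Cdiff_comp (fun x => / x) (fun w => w - z)).
  apply Cdiff_inv. exact Hn.
  apply (Cdiff_eql _ _ (1 + 0)). ring. apply Cdiff_plus. apply Cdiff_id. apply Cdiff_const.
Qed.

Lemma RDiff_eql phi t l1 l2 : l1 = l2 -> RDiff phi t l1 -> RDiff phi t l2.
Proof. intros ->; auto. Qed.

Lemma RDiff_line (z : C) s : RDiff (fun s => RtoC s * z) s z.
Proof. intros eps Heps. exists 1%R. split. lra. intros s' _.
  replace (RtoC s' * z - RtoC s * z - RtoC (s' - s) * z) with (RtoC 0) by Cbrute.
  rewrite Cmod_0. pose proof (Rabs_pos (s' - s)). nra. Qed.

Definition iga (t : R) : C := Ci * gam t.

Lemma RCc_iga t : RCc iga t.
Proof. apply RCc_mult. apply RCc_const. apply RCc_gam. Qed.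

Lemma K_deriv_zero z : (Cmod z < 1)%R -> Ph2 iga z = 0.
Proof.
  intros Hz. unfold Ph2.
  transitivity (CI (fun t => iga t * / ((gam t - z) * (gam t - z))) 0 (2 * PI)). reflexivity.
  rewrite (CI_FTC (fun t => - / (gam t - z))).
  rewrite gam_2PI. ring.
  - intros t _. apply (RDiff_comp (fun w => - / (w - z)) gam). apply Cdiff_shift_inv. intro E. apply (gam_sub_nz z t Hz). rewrite E. ring.
    apply RDiff_gam.
  - intros t _. apply RCc_mult. apply RCc_iga. apply RCc_inv.
    apply Cmult_neq_0; apply gam_sub_nz; exact Hz. apply RCc_mult; apply RCc_gam_sub.
Qed.

Lemma K_value z : (Cmod z < / 2)%R -> Ph1 iga z = Ci * RtoC (2 * PI).
Proof.
  intros Hz.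
  assert (H0 : Ph1 iga 0 = Ci * RtoC (2 * PI)).
  { unfold Ph1. rewrite (CI_ext _ (fun _ => Ci)). rewrite CI_const. f_equal. f_equal. ring.
    intros t _. unfold iga. replace (gam t - 0) with (gam t) by ring. field.
    intro E. pose proof (Cmod_gam t). rewrite E, Cmod_0 in H. lra. }
  rewrite <- H0.
  assert (E : CI (fun _ => RtoC 0) 0 1 = Ph1 iga (RtoC 1 * z) - Ph1 iga (RtoC 0 * z)).
  { apply (CI_FTC (fun s => Ph1 iga (RtoC s * z))).
    - intros s Hs. rewrite Rmin_left in Hs by lra. rewrite Rmax_right in Hs by lra.
      assert (Hsz : (Cmod (RtoC s * z) < / 2)%R).
      { rewrite Cmod_mult, Cmod_R, Rabs_right by lra. pose proof (Cmod_ge_0 z). nra. }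
      apply (RDiff_eql _ _ (z * Ph2 iga (RtoC s * z))). rewrite K_deriv_zero by lra. ring.
      apply RDiff_comp. apply Ph1_diff. apply RCc_iga. exact Hsz. apply RDiff_line.
    - intros; apply RCc_const. }
  rewrite CI_const in E. replace (RtoC 1 * z) with z in E by ring. replace (RtoC 0 * z) with (RtoC 0) in E by ring.
  transitivity (Ph1 iga z - Ph1 iga 0 + Ph1 iga 0). ring. rewrite <- E. ring.
Qed.
Open Scope C_scope.

Section Reg.
Variable f : C -> C.
Hypothesis Hf : entire f.

Lemma Cdiff_f w : Cdiff f w (D f w).
Proof. apply is_derive_Cdiff, entire_D, Hf. Qed.

Definition phif (t : R) : C := f (gam t) * iga t.

Lemma RCc_phif t : RCc phif t.
Proof. apply RCc_mult. apply RCc_comp. apply entire_Ccont, Hf. apply RCc_gam. apply RCc_iga. Qed.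

Lemma sub_nz (w z : C) : w <> z -> w - z <> 0.
Proof. intros H E. apply H. apply (f_equal (fun x => x + z)) in E. rewrite Cplus_0_l in E. rewrite <- E. ring. Qed.

Lemma cauchy z : (Cmod z < / 2)%R -> Ph1 phif z = f z * (Ci * RtoC (2 * PI)).
Proof.
  intros Hz.
  set (gz := fun w => if Ceq_dec w z then D f z else (f w - f z) / (w - z)).
  assert (Hgd : forall w, w <> z -> Cdiff gz w (D f w * / (w - z) + (f w - f z) * (1 * - / ((w - z) * (w - z))))).
  { intros w Hw. apply (Cdiff_loc gz (fun w => (f w - f z) * / (w - z)) w _ (Cmod (w - z))).
    apply Cmod_gt_0, sub_nz, Hw.
    intros w' Hw'. unfold gz. destruct (Ceq_dec w' z) as [E|E]. subst w'. rewrite Cmod_sub_sym in Hw'. lra.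
    reflexivity.
    apply (Cdiff_eql _ _ ((D f w + 0) * / (w - z) + (f w - f z) * (1 * - / ((w - z) * (w - z))))). ring.
    apply (Cdiff_mult (fun w => f w - f z) (fun w => / (w - z))).
    apply (Cdiff_plus f (fun _ => - f z)). apply Cdiff_f. apply Cdiff_const.
    apply (Cdiff_comp (fun x => / x) (fun w => w - z)). apply Cdiff_inv. apply sub_nz, Hw.
    apply (Cdiff_eql _ _ (1 + 0)). ring. apply Cdiff_plus. apply Cdiff_id. apply Cdiff_const. }
  assert (Hgc : forall w, Ccont gz w).
  { intros w. destruct (Ceq_dec w z) as [E|E].
    - subst w. intros eps Heps. destruct (Cdiff_f z (eps / 2)%R ltac:(lra)) as [d [Hd H']].
      exists d. split. exact Hd. intros w Hw. unfold gz.
      destruct (Ceq_dec w z) as [E|E]; destruct (Ceq_dec z z) as [_|E']; try congruence.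
      + subst w. replace (D f z - D f z) with (RtoC 0) by ring. rewrite Cmod_0. lra.
      + specialize (H' w Hw). assert (Hn := sub_nz w z E). assert (Hm : (0 < Cmod (w - z))%R) by (apply Cmod_gt_0; exact Hn).
        replace ((f w - f z) / (w - z) - D f z) with ((f w - f z - D f z * (w - z)) / (w - z)) by (field; exact Hn).
        rewrite Cmod_div by exact Hn. apply (Rmult_lt_reg_r (Cmod (w - z))). exact Hm.
        unfold Rdiv. rewrite Rmult_assoc, Rinv_l by lra. nra.
    - exact (Cdiff_Ccont _ _ _ (Hgd w E)). }
  assert (Hcz := circle_zero gz Hgc z (fun w Hw => ex_intro _ _ (Hgd w Hw))).
  assert (Hzn : forall t, gam t - z <> 0) by (intros; apply gam_sub_nz; lra).
  rewrite (CI_ext _ (fun t => phif t / (gam t - z) - f z * (iga t / (gam t - z)))) in Hcz.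
  2:{ intros t _. unfold gz. destruct (Ceq_dec (gam t) z) as [E|E].
      exfalso. apply (Hzn t). rewrite E. ring.
      unfold phif, iga. field. apply Hzn. }
  rewrite CI_minus in Hcz. rewrite CI_scal in Hcz.
  fold (Ph1 phif z) in Hcz. fold (Ph1 iga z) in Hcz. rewrite K_value in Hcz by exact Hz.
  apply (f_equal (fun x => x + f z * (Ci * RtoC (2 * PI)))) in Hcz. rewrite Cplus_0_l in Hcz. rewrite <- Hcz. ring.
  apply CIok_Ph1. intros; apply RCc_iga. lra.
  apply CIok_Ph1. apply RCc_phif. lra.
  apply CIok_scal. apply CIok_Ph1. intros; apply RCc_iga. lra.
Qed.

Lemma c_nz : Ci * RtoC (2 * PI) <> 0.
Proof. apply Cmult_neq_0. apply Ci_nz. intro E. apply RtoC_inj in E. pose proof PI_RGT_0. lra. Qed.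

Lemma Df_disk w : (Cmod w < / 2)%R -> D f w = Ph2 phif w * / (Ci * RtoC (2 * PI)).
Proof.
  intros Hw. apply (Cdiff_unique f w).
  apply Cdiff_f.
  apply (Cdiff_loc f (fun z => Ph1 phif z * / (Ci * RtoC (2 * PI))) w _ (/ 2 - Cmod w)%R). lra.
  intros z Hz. assert (Hz' : (Cmod z < / 2)%R) by (pose proof (Cmod_rev_triang z w); lra).
  rewrite cauchy by exact Hz'. field. split; [intro E; apply RtoC_inj in E; pose proof PI_RGT_0; lra|apply Ci_nz].
  apply (Cdiff_eql _ _ (Ph2 phif w * / (Ci * RtoC (2 * PI)) + Ph1 phif w * 0)). ring.
  apply (Cdiff_mult (Ph1 phif) (fun _ => / (Ci * RtoC (2 * PI)))). apply Ph1_diff. apply RCc_phif. exact Hw. apply Cdiff_const.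
Qed.

Lemma Df_diff0 : exists L, Cdiff (D f) 0 L.
Proof.
  exists (2 * Ph3 phif 0 * / (Ci * RtoC (2 * PI)) + Ph2 phif 0 * 0).
  apply (Cdiff_loc (D f) (fun w => Ph2 phif w * / (Ci * RtoC (2 * PI))) 0 _ (/ 2)). lra.
  intros w Hw. replace (w - 0) with w in Hw by ring. apply Df_disk. exact Hw.
  apply (Cdiff_mult (Ph2 phif) (fun _ => / (Ci * RtoC (2 * PI)))). apply Ph2_diff. apply RCc_phif. rewrite Cmod_0. lra. apply Cdiff_const.
Qed.
End Reg.

Lemma D_entire f : entire f -> entire (D f).
Proof.
  intros Hf z0.
  set (f0 := fun w => f (z0 + w)).
  assert (Hd0 : forall w, Cdiff f0 w (D f (z0 + w))).
  { intros w. apply (Cdiff_eql _ _ ((0 + 1) * D f (z0 + w))). ring.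
    apply (Cdiff_comp f (fun w => z0 + w)). apply Cdiff_f. exact Hf.
    apply Cdiff_plus. apply Cdiff_const. apply Cdiff_id. }
  assert (Hf0 : entire f0). { intros w. exists (D f (z0 + w)). apply Cdiff_is_derive, Hd0. }
  assert (ED : forall w, D f0 w = D f (z0 + w)). { intros w. apply D_spec, Cdiff_is_derive, Hd0. }
  destruct (Df_diff0 f0 Hf0) as [L HL].
  exists L. apply Cdiff_is_derive.
  intros eps Heps. destruct (HL eps Heps) as [d [Hd H']]. exists d. split. exact Hd.
  intros w Hw. specialize (H' (w - z0)). rewrite !ED in H'.
  replace (z0 + (w - z0)) with w in H' by ring. replace (z0 + 0) with z0 in H' by ring.
  replace (w - z0 - 0) with (w - z0) in H' by ring. apply H'. exact Hw.
Qed.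
Open Scope C_scope.

Lemma D_of h h' : (forall z, Cdiff h z (h' z)) -> D h = h'.
Proof. intros H. apply functional_extensionality. intros z. apply D_spec, Cdiff_is_derive, H. Qed.

Lemma Cdiff_minus f g z lf lg : Cdiff f z lf -> Cdiff g z lg -> Cdiff (fun w => f w - g w) z (lf - lg).
Proof. intros H1 H2. apply (Cdiff_plus f (fun w => - g w)). exact H1. apply Cdiff_opp. exact H2. Qed.

Lemma Cdiff_divc f (c : C) z l : Cdiff f z l -> Cdiff (fun w => f w / c) z (l * / c).
Proof. intros H. apply (Cdiff_eql _ _ (l * / c + f z * 0)). ring.
  apply (Cdiff_mult f (fun _ => / c)). exact H. apply Cdiff_const. Qed.

Lemma Cdiff_Cexp_comp u z l : Cdiff u z l -> Cdiff (fun w => Cexp (u w)) z (l * Cexp (u z)).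
Proof. intros H. apply (Cdiff_comp Cexp u). apply Cdiff_Cexp. exact H. Qed.

Ltac Cauto Hs :=
  first
  [ apply Cdiff_id
  | apply Cdiff_const
  | apply Hs
  | match goal with
    | |- Cdiff (fun z => @?u z * @?v z) _ _ => apply (Cdiff_mult u v); Cauto Hs
    | |- Cdiff (fun z => @?u z + @?v z) _ _ => apply (Cdiff_plus u v); Cauto Hs
    | |- Cdiff (fun z => @?u z - @?v z) _ _ => apply (Cdiff_minus u v); Cauto Hs
    | |- Cdiff (fun z => @?u z / ?c) _ _ => apply (Cdiff_divc u c); Cauto Hs
    | |- Cdiff (fun z => - @?u z) _ _ => apply (Cdiff_opp u); Cauto Hs
    | |- Cdiff (fun z => Cexp (@?u z)) _ _ => apply (Cdiff_Cexp_comp u); Cauto Hs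
    end ].

Lemma Cexp_nz z : Cexp z <> 0.
Proof. intro E. assert (Cexp (z + - z) = 1). { replace (z + - z) with (RtoC 0) by ring. apply Cexp_0. }
  rewrite Cexp_add, E in H. rewrite Cmult_0_l in H. apply C1_nz. rewrite H. reflexivity. Qed.

Lemma Cexp_neg z : Cexp (- z) = / Cexp z.
Proof. assert (H : Cexp z * Cexp (- z) = 1). { rewrite <- Cexp_add. replace (z + - z) with (RtoC 0) by ring. apply Cexp_0. }
  assert (Hn := Cexp_nz z).
  transitivity (/ Cexp z * (Cexp z * Cexp (- z))). field. exact Hn. rewrite H. field. exact Hn. Qed.

Lemma negmul (x y : C) : - x * y = - (x * y).
Proof. ring. Qed.

Ltac Cauto2 :=
  first
  [ apply Cdiff_id
  | apply Cdiff_const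
  | match goal with H : forall z, Cdiff _ z _ |- _ => apply H end
  | match goal with
    | |- Cdiff (fun z => @?u z * @?v z) _ _ => apply (Cdiff_mult u v); Cauto2
    | |- Cdiff (fun z => @?u z + @?v z) _ _ => apply (Cdiff_plus u v); Cauto2
    | |- Cdiff (fun z => @?u z - @?v z) _ _ => apply (Cdiff_minus u v); Cauto2
    | |- Cdiff (fun z => @?u z / ?c) _ _ => apply (Cdiff_divc u c); Cauto2
    | |- Cdiff (fun z => - @?u z) _ _ => apply (Cdiff_opp u); Cauto2
    | |- Cdiff (fun z => Cexp (@?u z)) _ _ => apply (Cdiff_Cexp_comp u); Cauto2
    end ].

Ltac solve_rel ha :=
  apply functional_extensionality; intros ?z;
  cbv [comm subo compo mulop Nop Aplus Aminus Bplus Bminus Mop expAplus scalo addo zeroo];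
  repeat match goal with |- context [D ?h] => match h with (fun _ => _) => erewrite (D_of h); [|intro; Cauto2] end end;
  cbv beta; rewrite ?RtoC_inv by exact ha; rewrite ?negmul; rewrite ?Cexp_neg;
  field; repeat split; first [apply Cexp_nz | (let E := fresh in intro E; apply RtoC_inj in E; contradiction)].

Theorem mainTheorem4 (a : R) (ha : a <> 0%R) :
  let N := Nop a in let Ap := Aplus in let Am := Aminus a in
  let Bp := Bplus a in let Bm := Bminus a in let M := Mop in
  let eA := expAplus (RtoC a) in let emA := expAplus (- RtoC a) in
  let ia := RtoC (/ a) in
  forall f : C -> C, entire f ->
  comm N Ap f = scalo ia (subo eA M) f /\
  comm N Am f = scalo (-1) Am f /\
  comm Am Ap f = compo M eA f /\
  comm N Bp f = scalo 2 Bp f /\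
  comm N Bm f = subo (scalo (-2) Bm) (scalo (RtoC a) (compo Am N)) f /\
  comm Bm Bp f =
    subo (addo (scalo 2 (compo (addo M emA) N)) (scalo 2 M))
         (scalo (2 * RtoC a) (compo Am Bp)) f /\
  comm Ap Bm f =
    addo (scalo (-1) (compo (addo M eA) Am))
         (scalo (RtoC a) (compo eA (compo M N))) f /\
  comm Ap Bp f = zeroo f /\
  comm Am Bp f = scalo (2 * ia) (subo M emA) f /\
  comm Am Bm f = scalo (- RtoC a) (compo Am Am) f /\
  comm M N f = zeroo f /\ comm M Ap f = zeroo f /\ comm M Am f = zeroo f /\
  comm M Bp f = zeroo f /\ comm M Bm f = zeroo f /\ comm M M f = zeroo f.
Proof.
  cbv zeta. intros f Hf.
  assert (Hf1 : entire (D f)) by (apply D_entire, Hf).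
  assert (Hf2 : entire (D (D f))) by (apply D_entire, Hf1).
  assert (H0 : forall z, Cdiff f z (D f z)) by (intros; apply Cdiff_f, Hf).
  assert (H1 : forall z, Cdiff (D f) z (D (D f) z)) by (intros; apply Cdiff_f, Hf1).
  assert (H2 : forall z, Cdiff (D (D f)) z (D (D (D f)) z)) by (intros; apply Cdiff_f, Hf2).
  clear Hf Hf1 Hf2.
  repeat split; solve_rel ha.
Qed.
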